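(* Let $f\in\mathbb{C}\{x,y,z\}$, $f=f_m+f_{m+1}+\cdots$ its decomposition into homogeneous parts with $f_m\neq0$, $V=\{f=0\}$ defined on a small neighbourhood $U$ of $0\in\mathbb{C}^3$, $\mathbf{C}=V(f_m)\subset\mathbb{P}^2$, and assume $\operatorname{Sing}(\mathbf{C})\cap V(f_{m+1})=\emptyset$ in $\mathbb{P}^2$. Let $\pi_0:\widehat U\to U$ be the blow-up at the origin with exceptional divisor $E_0\cong\mathbb{P}^2$ and let $\widehat V$ be the strict transform of $V$, so that $\widehat V\cap E_0$ is identified with $\mathbf{C}$. Let $P\in\mathbf{C}$. Then $\widehat V$ is smooth in a neighbourhood of $P$. Moreover, $\widehat V$ and $E_0$ intersect transversely at $P$ if and only if $P$ is a smooth point of $\mathbf{C}$; otherwise, i.e. if $P\in\operatorname{Sing}(\mathbf{C})$, there exist local analytic coordinates $(x,y,z)$ around $P$ in which $E_0=\{z=0\}$ and $\widehat V=\{z+h(x,y)=0\}$, where $h(x,y)=0$ is a local equation of $\mathbf{C}$ at $P$ and $h$ has order at least $2$. *)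

(* Defs.v *)
From Stdlib Require Import Reals.
From Coquelicot Require Import Coquelicot.

Definition CC : Type := Complex.C.
Definition C3 : Type := (CC * CC * CC)%type.
Definition c0 : CC := RtoC 0.
Definition origin : C3 := (c0, c0, c0).

Definition p1 (w : C3) : CC := fst (fst w).
Definition p2 (w : C3) : CC := snd (fst w).
Definition p3 (w : C3) : CC := snd w.

Local Open Scope C_scope.

Definition coeffs : Type := nat -> nat -> nat -> CC.

Definition hom (a : coeffs) (k : nat) (w : C3) : CC :=
  sum_n (fun i => sum_n (fun j =>
     a i j (k - i - j)%nat * pow_n (p1 w) i * pow_n (p2 w) j
       * pow_n (p3 w) (k - i - j)%nat) (k - i)%nat) k.

Definition hom_dx (a : coeffs) (k : nat) (w : C3) : CC :=
  sum_n (fun i => sum_n (fun j =>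
     RtoC (INR i) * a i j (k - i - j)%nat * pow_n (p1 w) (i - 1)%nat * pow_n (p2 w) j
       * pow_n (p3 w) (k - i - j)%nat) (k - i)%nat) k.
Definition hom_dy (a : coeffs) (k : nat) (w : C3) : CC :=
  sum_n (fun i => sum_n (fun j =>
     RtoC (INR j) * a i j (k - i - j)%nat * pow_n (p1 w) i * pow_n (p2 w) (j - 1)%nat
       * pow_n (p3 w) (k - i - j)%nat) (k - i)%nat) k.
Definition hom_dz (a : coeffs) (k : nat) (w : C3) : CC :=
  sum_n (fun i => sum_n (fun j =>
     RtoC (INR (k - i - j)) * a i j (k - i - j)%nat * pow_n (p1 w) i * pow_n (p2 w) j
       * pow_n (p3 w) (k - i - j - 1)%nat) (k - i)%nat) k.

Definition convergent (a : coeffs) : Prop :=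
  exists r : R, (0 < r)%R /\
    ex_series (fun k => (sum_n (fun i => sum_n (fun j =>
        Cmod (a i j (k - i - j)%nat)) (k - i)%nat) k * r ^ k)%R).

Definition order_is (a : coeffs) (m : nat) : Prop :=
  (forall i j l, (i + j + l < m)%nat -> a i j l = c0) /\
  (exists i j l, (i + j + l = m)%nat /\ a i j l <> c0).

(* w (nonzero, a homogeneous representative) is a singular point of the
   projective curve V(f_m) *)
Definition sing_pt (a : coeffs) (m : nat) (w : C3) : Prop :=
  hom a m w = c0 /\ hom_dx a m w = c0 /\ hom_dy a m w = c0 /\ hom_dz a m w = c0.

Definition near3 (e : R) (c w : C3) : Prop :=
  (Cmod (p1 w - p1 c) < e /\ Cmod (p2 w - p2 c) < e /\ Cmod (p3 w - p3 c) < e)%R.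
Definition near2 (e : R) (c w : CC * CC) : Prop :=
  (Cmod (fst w - fst c) < e /\ Cmod (snd w - snd c) < e)%R.

Definition open3 (D : C3 -> Prop) : Prop :=
  forall w, D w -> exists e : R, (0 < e)%R /\ forall w', near3 e w w' -> D w'.
Definition open2 (D : CC * CC -> Prop) : Prop :=
  forall w, D w -> exists e : R, (0 < e)%R /\ forall w', near2 e w w' -> D w'.

Definition pd1 (F : C3 -> CC) (w : C3) (l : CC) : Prop :=
  is_derive (fun s : CC => F (s, p2 w, p3 w)) (p1 w) l.
Definition pd2 (F : C3 -> CC) (w : C3) (l : CC) : Prop :=
  is_derive (fun s : CC => F (p1 w, s, p3 w)) (p2 w) l.
Definition pd3 (F : C3 -> CC) (w : C3) (l : CC) : Prop :=
  is_derive (fun s : CC => F (p1 w, p2 w, s)) (p3 w) l.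
Definition grad3 (F : C3 -> CC) (w : C3) (l : C3) : Prop :=
  pd1 F w (p1 l) /\ pd2 F w (p2 l) /\ pd3 F w (p3 l).

Definition qd1 (h : CC * CC -> CC) (w : CC * CC) (l : CC) : Prop :=
  is_derive (fun s : CC => h (s, snd w)) (fst w) l.
Definition qd2 (h : CC * CC -> CC) (w : CC * CC) (l : CC) : Prop :=
  is_derive (fun s : CC => h (fst w, s)) (snd w) l.

(* holomorphic on an open set (Osgood: continuous + separately holomorphic) *)
Definition holo3 (F : C3 -> CC) (D : C3 -> Prop) : Prop :=
  open3 D /\
  (forall w, D w -> forall e : R, (0 < e)%R -> exists d : R, (0 < d)%R /\
      forall w', near3 d w w' -> (Cmod (F w' - F w) < e)%R) /\
  (forall w, D w -> exists l1 l2 l3, pd1 F w l1 /\ pd2 F w l2 /\ pd3 F w l3).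
Definition holo2 (h : CC * CC -> CC) (D : CC * CC -> Prop) : Prop :=
  open2 D /\
  (forall w, D w -> forall e : R, (0 < e)%R -> exists d : R, (0 < d)%R /\
      forall w', near2 d w w' -> (Cmod (h w' - h w) < e)%R) /\
  (forall w, D w -> exists l1 l2, qd1 h w l1 /\ qd2 h w l2).

Definition det3 (u v w : C3) : CC :=
  p1 u * (p2 v * p3 w - p3 v * p2 w)
  - p2 u * (p1 v * p3 w - p3 v * p1 w)
  + p3 u * (p1 v * p2 w - p2 v * p1 w).

(* Given a basis (q, b1, b2) of C^3, the chart (u,v,t) of the blow-up of C^3
   at 0 is  (u,v,t) |-> ( t*(q + u b1 + v b2) , [q + u b1 + v b2] ).
   In it E_0 = {t = 0}, the point P = [q] of E_0 is the chart origin,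
   and E_0 is identified with the affine chart (u,v) |-> [q + u b1 + v b2]. *)
Definition chartpt (q b1 b2 : C3) (u v : CC) : C3 :=
  (p1 q + u * p1 b1 + v * p1 b2,
   p2 q + u * p2 b1 + v * p2 b2,
   p3 q + u * p3 b1 + v * p3 b2).

(* G is, near the chart origin, the equation of the strict transform:
   f(t*p) = t^m * G(u,v,t) with  G(u,v,t) = sum_k t^k f_{m+k}(p),
   p = q + u b1 + v b2. *)
Definition strict_transform_eq (a : coeffs) (m : nat) (q b1 b2 : C3)
    (G : C3 -> CC) : Prop :=
  exists r : R, (0 < r)%R /\ forall u v t,
    (Cmod u < r)%R -> (Cmod v < r)%R -> (Cmod t < r)%R ->
    is_series (fun k => pow_n t k * hom a (m + k) (chartpt q b1 b2 u v))
              (G (u, v, t)).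

Definition smooth_near_origin (G : C3 -> CC) : Prop :=
  exists e : R, (0 < e)%R /\ forall w, near3 e origin w -> G w = c0 ->
    exists l, grad3 G w l /\ l <> origin.

(* V^ = {G=0} and E_0 = {t=0} meet transversally at P: dG(P) and dt are
   linearly independent *)
Definition transverse_at_origin (G : C3 -> CC) : Prop :=
  exists l, grad3 G origin l /\
    forall al be : CC,
      al * p1 l = c0 -> al * p2 l = c0 -> al * p3 l + be = c0 ->
      al = c0 /\ be = c0.

(* existence of local analytic coordinates Phi = (x,y,z) around P (P |-> 0)
   with E_0 = {z = 0}, V^ = {z + h(x,y) = 0}, h a local equation of the
   curve C (in E_0) at P, and ord h >= 2 *)
Definition good_coordinates (a : coeffs) (m : nat) (q b1 b2 : C3)
    (G : C3 -> CC) : Prop :=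
  exists (W : C3 -> Prop) (f1 f2 f3 : C3 -> CC) (h : CC * CC -> CC)
         (D2 : CC * CC -> Prop) (e : C3 -> CC) (J1 J2 J3 : C3),
    W origin /\
    holo3 f1 W /\ holo3 f2 W /\ holo3 f3 W /\
    (forall w w', W w -> W w' ->
        (f1 w, f2 w, f3 w) = (f1 w', f2 w', f3 w') -> w = w') /\
    grad3 f1 origin J1 /\ grad3 f2 origin J2 /\ grad3 f3 origin J3 /\
    det3 J1 J2 J3 <> c0 /\
    f1 origin = c0 /\ f2 origin = c0 /\ f3 origin = c0 /\
    (forall w, W w -> (p3 w = c0 <-> f3 w = c0)) /\
    holo2 h D2 /\ (forall w, W w -> D2 (f1 w, f2 w)) /\
    (forall w, W w -> (G w = c0 <-> f3 w + h (f1 w, f2 w) = c0)) /\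
    (* h(x,y) = 0 is a local equation of C at P: on E_0, h = unit * f_m *)
    holo3 e W /\ (forall w, W w -> e w <> c0) /\
    (forall w, W w -> p3 w = c0 ->
        h (f1 w, f2 w) = e w * hom a m (chartpt q b1 b2 (p1 w) (p2 w))) /\
    (* ord h >= 2 *)
    h (c0, c0) = c0 /\ qd1 h (c0, c0) c0 /\ qd2 h (c0, c0) c0.

(* Main.v *)
Require Import Defs.
From Stdlib Require Import Reals Lra Lia Psatz Classical.
From Coquelicot Require Import Coquelicot.
Open Scope R_scope.

Definition CC_ring_theory : @ring_theory CC (RtoC 0) (RtoC 1) Cplus Cmult Cminus Copp eq := C_ring_theory.
Add Ring CCring : CC_ring_theory.
Definition CC_field_theory : @field_theory CC (RtoC 0) (RtoC 1) Cplus Cmult Cminus Copp Cdiv Cinv eq := C_field_theory.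
Add Field CCfield : CC_field_theory.

Lemma cmod_mul_le (a b : C) (A B : R) : Cmod a <= A -> Cmod b <= B -> Cmod (a * b)%C <= A * B.
Proof. intros Ha Hb. rewrite Cmod_mult. apply Rmult_le_compat; auto using Cmod_ge_0. Qed.

Lemma cmod_add_le (a b : C) (A B : R) : Cmod a <= A -> Cmod b <= B -> Cmod (a + b)%C <= A + B.
Proof. intros. eapply Rle_trans. apply Cmod_triangle. lra. Qed.

Definition PB (h F0 F1 Fh : C) (M g r : R) : Prop :=
  Cmod F0 <= M /\ Cmod Fh <= M /\ Cmod (Fh - F0)%C <= (g-1)*M*r /\
  Cmod (Fh - F0 - h*F1)%C <= (g-1)*M*(r*r).

Lemma PB_ext h F0 F1 Fh M g r F0' F1' Fh' M' g' :
  PB h F0 F1 Fh M g r -> F0 = F0' -> F1 = F1' -> Fh = Fh' -> M = M' -> g = g' ->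
  PB h F0' F1' Fh' M' g' r.
Proof. intros; subst; auto. Qed.

Lemma PB_prod h F0 F1 Fh M g G0 G1 Gh N g' r :
  PB h F0 F1 Fh M g r -> PB h G0 G1 Gh N g' r -> 1 <= g -> 1 <= g' -> 0 <= r ->
  PB h (F0*G0)%C (F1*G0 + F0*G1)%C (Fh*Gh)%C (M*N) (g*g') r.
Proof.
  intros [A1 [A2 [A3 A4]]] [B1 [B2 [B3 B4]]] Hg Hg' Hr.
  assert (HM : 0 <= M) by (eapply Rle_trans; [apply Cmod_ge_0|exact A1]).
  assert (HN : 0 <= N) by (eapply Rle_trans; [apply Cmod_ge_0|exact B1]).
  split; [|split; [|split]].
  - apply cmod_mul_le; auto.
  - apply cmod_mul_le; auto.
  - replace (Fh*Gh - F0*G0)%C with ((Fh - F0)*Gh + F0*(Gh - G0))%C by ring.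
    eapply Rle_trans. apply cmod_add_le; apply cmod_mul_le; eauto.
    assert (0 <= (g-1)*(g'-1)*(M*N*r)).
    { apply Rmult_le_pos. apply Rmult_le_pos; lra. apply Rmult_le_pos; [apply Rmult_le_pos|]; lra. }
    nra.
  - replace (Fh*Gh - F0*G0 - h*(F1*G0 + F0*G1))%C with
      ((Fh - F0 - h*F1)*G0 + F0*(Gh - G0 - h*G1) + (Fh-F0)*(Gh-G0))%C by ring.
    eapply Rle_trans. apply cmod_add_le. apply cmod_add_le; apply cmod_mul_le; eauto.
    apply cmod_mul_le; eauto.
    right. ring.
Qed.

Lemma PB_add h F0 F1 Fh M G0 G1 Gh N g r :
  PB h F0 F1 Fh M g r -> PB h G0 G1 Gh N g r ->
  PB h (F0+G0)%C (F1+G1)%C (Fh+Gh)%C (M+N) g r.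
Proof.
  intros [A1 [A2 [A3 A4]]] [B1 [B2 [B3 B4]]].
  split; [|split; [|split]].
  - apply cmod_add_le; auto.
  - apply cmod_add_le; auto.
  - replace (Fh+Gh - (F0+G0))%C with ((Fh - F0) + (Gh - G0))%C by ring.
    eapply Rle_trans. apply cmod_add_le; eauto. right; ring.
  - replace (Fh+Gh - (F0+G0) - h*(F1+G1))%C with
      ((Fh - F0 - h*F1) + (Gh - G0 - h*G1))%C by ring.
    eapply Rle_trans. apply cmod_add_le; eauto. right; ring.
Qed.

Lemma PB_scal h c F0 F1 Fh M g r :
  PB h F0 F1 Fh M g r -> 1 <= g -> 0 <= r ->
  PB h (c*F0)%C (c*F1)%C (c*Fh)%C (Cmod c * M) g r.
Proof.
  intros [A1 [A2 [A3 A4]]] Hg Hr.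
  assert (Hc := Cmod_ge_0 c).
  split; [|split; [|split]].
  - apply cmod_mul_le; auto; lra.
  - apply cmod_mul_le; auto; lra.
  - replace (c*Fh - c*F0)%C with (c*(Fh - F0))%C by ring.
    eapply Rle_trans. apply cmod_mul_le. apply Rle_refl. eauto. right; ring.
  - replace (c*Fh - c*F0 - h*(c*F1))%C with (c*(Fh - F0 - h*F1))%C by ring.
    eapply Rle_trans. apply cmod_mul_le. apply Rle_refl. eauto. right; ring.
Qed.

Lemma PB_mono h F0 F1 Fh M g r M' g' :
  PB h F0 F1 Fh M g r -> 1 <= g -> 0 <= r -> M <= M' -> g <= g' -> PB h F0 F1 Fh M' g' r.
Proof.
  intros [A1 [A2 [A3 A4]]] Hg Hr HM Hg'.
  assert (HM0 : 0 <= M) by (eapply Rle_trans; [apply Cmod_ge_0|exact A1]).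
  assert ((g-1)*M <= (g'-1)*M') by (apply Rmult_le_compat; lra).
  split; [|split; [|split]]; try lra.
  - eapply Rle_trans; [exact A3|]. apply Rmult_le_compat_r; lra.
  - eapply Rle_trans; [exact A4|]. apply Rmult_le_compat_r; nra.
Qed.

Lemma PB_sum h (F0 F1 Fh : nat -> C) (M : nat -> R) g r n :
  1 <= g -> 0 <= r -> (forall i, (i <= n)%nat -> PB h (F0 i) (F1 i) (Fh i) (M i) g r) ->
  PB h (sum_n F0 n) (sum_n F1 n) (sum_n Fh n) (sum_n M n) g r.
Proof.
  intros Hg Hr. induction n; intros H.
  - rewrite !sum_O. apply H; lia.
  - unfold sum_n in *. rewrite !sum_n_Sm by lia.
    apply PB_add. apply IHn. intros; apply H; lia. apply H; lia.
Qed.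

Lemma PB_affine h x b M g r :
  1 <= g -> 0 <= r ->
  Cmod x <= M -> Cmod (x + h*b)%C <= M -> Cmod b * Cmod h <= (g-1)*M*r ->
  PB h x b (x + h*b)%C M g r.
Proof.
  intros. split; [|split;[|split]]; auto.
  - replace (x + h*b - x)%C with (b*h)%C by ring. rewrite Cmod_mult. auto.
  - replace (x + h*b - x - h*b)%C with (RtoC 0) by ring. rewrite Cmod_0.
    assert (0 <= M) by (eapply Rle_trans; [apply Cmod_ge_0|eauto]).
    apply Rmult_le_pos. apply Rmult_le_pos; lra. nra.
Qed.

Ltac cr := first [ ring
  | match goal with |- ?x = ?y => change (@eq C x y) end; ring
  | match goal with |- ?x = ?y => change (@eq CC x y) end; ring ].

Lemma pow_n_S (x : C) k : pow_n x (S k) = (x * pow_n x k)%C.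
Proof. reflexivity. Qed.
Lemma pow_n_O (x : C) : pow_n x 0 = RtoC 1.
Proof. reflexivity. Qed.

Lemma cmod_xx (x : C) : Cmod (x - x)%C = 0.
Proof. replace (x - x)%C with (RtoC 0) by ring. apply Cmod_0. Qed.
Lemma cmod_xx2 (x h y z : C) : Cmod (x - x - h * (RtoC 0 * y * z))%C = 0.
Proof. replace (x - x - h * (RtoC 0 * y * z))%C with (RtoC 0) by ring. apply Cmod_0. Qed.

Lemma PB_pow h F0 F1 Fh M g r k : 1 <= g -> 0 <= r -> PB h F0 F1 Fh M g r ->
  PB h (pow_n F0 k) (RtoC (INR k) * pow_n F0 (k-1) * F1)%C (pow_n Fh k) (M^k) (g^k) r.
Proof.
  intros Hg Hr HP. induction k.
  - rewrite !pow_n_O. simpl (M^0). simpl (g^0). change (INR 0) with 0. split;[|split;[|split]]; rewrite ?Cmod_1, ?cmod_xx, ?cmod_xx2; lra.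
  - rewrite !pow_n_S. simpl (M ^ S k). simpl (g ^ S k).
    eapply PB_ext. apply (PB_prod h F0 F1 Fh M g _ _ _ _ _ r HP IHk Hg); [apply pow_R1_Rle; lra | exact Hr].
    all: try reflexivity.
    destruct k.
    + simpl. ring.
    + replace (S (S k) - 1)%nat with (S k) by lia. replace (S k - 1)%nat with k by lia.
      rewrite pow_n_S. rewrite (S_INR (S k)). rewrite RtoC_plus. ring.
Qed.

Definition mono (i j l : nat) (p : C3) : C :=
  (pow_n (p1 p) i * pow_n (p2 p) j * pow_n (p3 p) l)%C.
Definition Dmono (i j l : nat) (p b : C3) : C :=
  (((RtoC (INR i) * pow_n (p1 p) (i-1) * p1 b) * pow_n (p2 p) j
    + pow_n (p1 p) i * (RtoC (INR j) * pow_n (p2 p) (j-1) * p2 b)) * pow_n (p3 p) l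
   + (pow_n (p1 p) i * pow_n (p2 p) j) * (RtoC (INR l) * pow_n (p3 p) (l-1) * p3 b))%C.

Definition Aco (a : coeffs) (n : nat) : R :=
  sum_n (fun i => sum_n (fun j => Cmod (a i j (n-i-j)%nat)) (n-i)) n.
Definition dhom (a : coeffs) (n : nat) (p b : C3) : C :=
  sum_n (fun i => sum_n (fun j => (a i j (n-i-j)%nat * Dmono i j (n-i-j) p b)%C) (n-i)) n.

Definition compat (h : C) (p b ph : C3) (M g r : R) : Prop :=
  (Cmod (p1 p) <= M /\ Cmod (p1 ph) <= M /\ p1 ph = (p1 p + h * p1 b)%C /\ Cmod (p1 b) * Cmod h <= (g-1)*M*r) /\
  (Cmod (p2 p) <= M /\ Cmod (p2 ph) <= M /\ p2 ph = (p2 p + h * p2 b)%C /\ Cmod (p2 b) * Cmod h <= (g-1)*M*r) /\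
  (Cmod (p3 p) <= M /\ Cmod (p3 ph) <= M /\ p3 ph = (p3 p + h * p3 b)%C /\ Cmod (p3 b) * Cmod h <= (g-1)*M*r).

Lemma PB_mono3 h p b ph M g r i j l : 1 <= g -> 0 <= r -> compat h p b ph M g r ->
  PB h (mono i j l p) (Dmono i j l p b) (mono i j l ph) (M^(i+j+l)) (g^(i+j+l)) r.
Proof.
  intros Hg Hr [[A1 [A2 [A3 A4]]] [[B1 [B2 [B3 B4]]] [C1 [C2 [C3 C4]]]]].
  assert (HA := PB_affine h _ _ _ _ _ Hg Hr A1 (eq_ind _ (fun z => Cmod z <= M) A2 _ A3) A4).
  assert (HB := PB_affine h _ _ _ _ _ Hg Hr B1 (eq_ind _ (fun z => Cmod z <= M) B2 _ B3) B4).
  assert (HC := PB_affine h _ _ _ _ _ Hg Hr C1 (eq_ind _ (fun z => Cmod z <= M) C2 _ C3) C4).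
  apply (PB_pow _ _ _ _ _ _ _ i Hg Hr) in HA.
  apply (PB_pow _ _ _ _ _ _ _ j Hg Hr) in HB.
  apply (PB_pow _ _ _ _ _ _ _ l Hg Hr) in HC.
  assert (Hgi : 1 <= g^i) by (apply pow_R1_Rle; lra).
  assert (Hgj : 1 <= g^j) by (apply pow_R1_Rle; lra).
  assert (Hgl : 1 <= g^l) by (apply pow_R1_Rle; lra).
  assert (H2 := PB_prod _ _ _ _ _ _ _ _ _ _ _ _ HA HB Hgi Hgj Hr).
  assert (Hgij : 1 <= g^i * g^j) by nra.
  assert (H3 := PB_prod _ _ _ _ _ _ _ _ _ _ _ _ H2 HC Hgij Hgl Hr).
  eapply PB_ext. exact H3.
  - reflexivity.
  - reflexivity.
  - unfold mono. rewrite A3, B3, C3. reflexivity.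
  - rewrite !pow_add. reflexivity.
  - rewrite !pow_add. reflexivity.
Qed.

Lemma plusC (x y : C) : @plus C_AbelianMonoid x y = Cplus x y.
Proof. reflexivity. Qed.
Lemma plusC' (x y : C) : @plus (AbelianGroup.AbelianMonoid C_AbelianGroup) x y = Cplus x y.
Proof. reflexivity. Qed.
Lemma multC (x y : C) : @mult C_Ring x y = Cmult x y.
Proof. reflexivity. Qed.
Ltac cring := try change (@plus C_AbelianMonoid) with Cplus;
  try change (@plus (AbelianGroup.AbelianMonoid C_AbelianGroup)) with Cplus;
  try change (@mult C_Ring) with Cmult; match goal with |- ?x = ?y => change (@eq C x y) end; ring.

Lemma hom_mono a n p : hom a n p =
  sum_n (fun i => sum_n (fun j => (a i j (n-i-j)%nat * mono i j (n-i-j) p)%C) (n-i)) n.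
Proof.
  unfold hom. apply sum_n_ext; intro i. apply sum_n_ext; intro j. unfold mono. cring.
Qed.

Lemma sum_n_Rmult_r (u : nat -> R) c n : sum_n (fun k => u k * c) n = sum_n u n * c.
Proof. apply (sum_n_mult_r c u n). Qed.

Lemma PB_M h F0 F1 Fh M g r M' : PB h F0 F1 Fh M g r -> M = M' -> PB h F0 F1 Fh M' g r.
Proof. intros; subst; auto. Qed.

Lemma PB_hom h p b ph M g r a n : 1 <= g -> 0 <= r -> compat h p b ph M g r ->
  PB h (hom a n p) (dhom a n p b) (hom a n ph) (Aco a n * M^n) (g^n) r.
Proof.
  intros Hg Hr Hc. rewrite !hom_mono. unfold dhom, Aco.
  assert (Hgn : 1 <= g^n) by (apply pow_R1_Rle; lra).
  eapply PB_M. apply PB_sum; [auto|auto|]. intros i Hi.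
  apply PB_sum; [auto|auto|]. intros j Hj.
  apply PB_scal; [|auto|auto].
  replace (g^n) with (g^(i+j+(n-i-j))) by (f_equal; lia).
  eapply PB_M. apply (PB_mono3 h p b ph M g r i j (n-i-j)); auto.
  replace (i + j + (n-i-j))%nat with n by lia. reflexivity.
  rewrite <- sum_n_Rmult_r. apply sum_n_ext; intro i.
  rewrite <- sum_n_Rmult_r. reflexivity.
Qed.

Lemma sum_lin3 (u v w : nat -> C) (x y z : C) n :
  sum_n (fun k => (x * u k + y * v k + z * w k)%C) n =
  (x * sum_n u n + y * sum_n v n + z * sum_n w n)%C.
Proof.
  induction n.
  - rewrite !sum_O. reflexivity.
  - unfold sum_n in *. rewrite !sum_n_Sm by lia. rewrite IHn. cring.
Qed.

Lemma sum_scal1 (u : nat -> C) (x : C) n :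
  sum_n (fun k => (x * u k)%C) n = (x * sum_n u n)%C.
Proof.
  induction n.
  - rewrite !sum_O. reflexivity.
  - unfold sum_n in *. rewrite !sum_n_Sm by lia. rewrite IHn. cring.
Qed.

Lemma dhom_grad a n p b :
  dhom a n p b = (p1 b * hom_dx a n p + p2 b * hom_dy a n p + p3 b * hom_dz a n p)%C.
Proof.
  unfold dhom, hom_dx, hom_dy, hom_dz.
  rewrite <- sum_lin3. apply sum_n_ext; intro i.
  rewrite <- sum_lin3. apply sum_n_ext; intro j.
  unfold Dmono. cring.
Qed.

Lemma pow_pred_mul (x : C) i : (RtoC (INR i) * pow_n x (i-1) * x)%C = (RtoC (INR i) * pow_n x i)%C.
Proof.
  destruct i.
  - simpl. cring.
  - replace (S i - 1)%nat with i by lia. rewrite pow_n_S. cring.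
Qed.

Lemma euler a n p : dhom a n p p = (RtoC (INR n) * hom a n p)%C.
Proof.
  rewrite hom_mono. unfold dhom. rewrite <- sum_scal1.
  apply sum_n_ext_loc; intros i Hi. rewrite <- sum_scal1.
  apply sum_n_ext_loc; intros j Hj.
  unfold Dmono, mono.
  set (l := (n - i - j)%nat).
  assert (HI : INR n = INR i + INR j + INR l) by (rewrite <- !plus_INR; f_equal; unfold l; lia).
  rewrite HI, !RtoC_plus.
  transitivity (a i j l * ((RtoC (INR i) * pow_n (p1 p) (i - 1) * p1 p) * pow_n (p2 p) j * pow_n (p3 p) l
     + pow_n (p1 p) i * (RtoC (INR j) * pow_n (p2 p) (j - 1) * p2 p) * pow_n (p3 p) l
     + pow_n (p1 p) i * pow_n (p2 p) j * (RtoC (INR l) * pow_n (p3 p) (l - 1) * p3 p)))%C.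
  { cring. }
  rewrite !pow_pred_mul. cring.
Qed.

Lemma chart0 q b1 b2 : chartpt q b1 b2 c0 c0 = q.
Proof.
  destruct q as [[x y] z]. unfold chartpt, p1, p2, p3, c0; cbn [fst snd].
  apply injective_projections; cbn [fst snd]; [apply injective_projections; cbn [fst snd]|]; cring.
Qed.

Lemma cramer (q b1 b2 g : C3) :
  det3 q b1 b2 <> c0 ->
  (p1 q * p1 g + p2 q * p2 g + p3 q * p3 g)%C = c0 ->
  (p1 b1 * p1 g + p2 b1 * p2 g + p3 b1 * p3 g)%C = c0 ->
  (p1 b2 * p1 g + p2 b2 * p2 g + p3 b2 * p3 g)%C = c0 ->
  p1 g = c0 /\ p2 g = c0 /\ p3 g = c0.
Proof.
  intros Hd H0 H1 H2. unfold det3, c0 in *.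
  set (D := det3 q b1 b2) in *.
  assert (E1 : (det3 q b1 b2 * p1 g)%C =
     ((p1 q * p1 g + p2 q * p2 g + p3 q * p3 g) * (p2 b1 * p3 b2 - p3 b1 * p2 b2)
     - (p1 b1 * p1 g + p2 b1 * p2 g + p3 b1 * p3 g) * (p2 q * p3 b2 - p3 q * p2 b2)
     + (p1 b2 * p1 g + p2 b2 * p2 g + p3 b2 * p3 g) * (p2 q * p3 b1 - p3 q * p2 b1))%C)
    by (unfold det3; cring).
  assert (E2 : (det3 q b1 b2 * p2 g)%C =
     (- (p1 q * p1 g + p2 q * p2 g + p3 q * p3 g) * (p1 b1 * p3 b2 - p3 b1 * p1 b2)
     + (p1 b1 * p1 g + p2 b1 * p2 g + p3 b1 * p3 g) * (p1 q * p3 b2 - p3 q * p1 b2)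
     - (p1 b2 * p1 g + p2 b2 * p2 g + p3 b2 * p3 g) * (p1 q * p3 b1 - p3 q * p1 b1))%C)
    by (unfold det3; cring).
  assert (E3 : (det3 q b1 b2 * p3 g)%C =
     ((p1 q * p1 g + p2 q * p2 g + p3 q * p3 g) * (p1 b1 * p2 b2 - p2 b1 * p1 b2)
     - (p1 b1 * p1 g + p2 b1 * p2 g + p3 b1 * p3 g) * (p1 q * p2 b2 - p2 q * p1 b2)
     + (p1 b2 * p1 g + p2 b2 * p2 g + p3 b2 * p3 g) * (p1 q * p2 b1 - p2 q * p1 b1))%C)
    by (unfold det3; cring).
  rewrite H0, H1, H2 in E1, E2, E3.
  split; [|split].
  - assert (Z : (det3 q b1 b2 * p1 g)%C = RtoC 0) by (rewrite E1; cring).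
    apply (f_equal (fun x => (/ det3 q b1 b2 * x)%C)) in Z.
    rewrite Cmult_assoc, Cinv_l, Cmult_1_l in Z by exact Hd.
    rewrite Z. cring.
  - assert (Z : (det3 q b1 b2 * p2 g)%C = RtoC 0) by (rewrite E2; cring).
    apply (f_equal (fun x => (/ det3 q b1 b2 * x)%C)) in Z.
    rewrite Cmult_assoc, Cinv_l, Cmult_1_l in Z by exact Hd.
    rewrite Z. cring.
  - assert (Z : (det3 q b1 b2 * p3 g)%C = RtoC 0) by (rewrite E3; cring).
    apply (f_equal (fun x => (/ det3 q b1 b2 * x)%C)) in Z.
    rewrite Cmult_assoc, Cinv_l, Cmult_1_l in Z by exact Hd.
    rewrite Z. cring.
Qed.

Lemma partial_norm_le (y : nat -> C) (z : nat -> R) n :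
  (forall k, Cmod (y k) <= z k) -> Cmod (sum_n y n) <= sum_n z n.
Proof.
  intros H. induction n.
  - rewrite !sum_O. apply H.
  - unfold sum_n in *. rewrite !sum_n_Sm by lia.
    eapply Rle_trans. apply Cmod_triangle. apply Rplus_le_compat; auto.
Qed.

Lemma series_norm_le (y : nat -> C) (z : nat -> R) (Y : C) (Z : R) :
  is_series y Y -> is_series z Z -> (forall k, Cmod (y k) <= z k) -> Cmod Y <= Z.
Proof.
  intros HY HZ H.
  assert (A : filterlim (fun n => norm (sum_n y n)) eventually (locally (norm Y))).
  { eapply filterlim_comp. exact HY. apply filterlim_norm. }
  assert (B := @filterlim_le nat eventually (Proper_StrongProper _ eventually_filter)
     (fun n => norm (sum_n y n)) (sum_n z) (norm Y) Z).
  simpl in B. apply B; auto.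
  exists 0%nat. intros n _. apply partial_norm_le. auto.
Qed.

Lemma series_unique (y : nat -> C) (Y Y' : C) : is_series y Y -> is_series y Y' -> Y = Y'.
Proof.
  intros. eapply (@filterlim_locally_unique nat _ _ eventually (Proper_StrongProper _ eventually_filter)); eauto.
Qed.

Lemma series_eventually (y : nat -> C) (L : C) N :
  (forall n, (N <= n)%nat -> sum_n y n = L) -> is_series y L.
Proof.
  intros H. unfold is_series. eapply filterlim_ext_loc.
  2: apply filterlim_const. exists N. intros n Hn. symmetry. apply H. auto.
Qed.

Lemma series_first (x : nat -> C) : is_series (fun k => (pow_n (RtoC 0) k * x k)%C) (x 0%nat).
Proof.
  apply series_eventually with 0%nat. intros n _. induction n.
  - rewrite sum_O. rewrite pow_n_O. cring.
  - unfold sum_n in *. rewrite sum_n_Sm by lia. rewrite IHn. rewrite pow_n_S. cring.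
Qed.

Lemma series_second (x : nat -> C) :
  is_series (fun k => (RtoC (INR k) * pow_n (RtoC 0) (k-1) * x k)%C) (x 1%nat).
Proof.
  apply series_eventually with 1%nat. intros n Hn. induction n.
  - lia.
  - destruct n.
    + unfold sum_n. rewrite sum_n_Sm by lia. rewrite sum_n_n.
      change (INR 0) with 0. change (INR 1) with 1. cbn [Nat.sub]. rewrite !pow_n_O. cring.
    + unfold sum_n in *. rewrite sum_n_Sm by lia. rewrite IHn by lia.
      replace (S (S n) - 1)%nat with (S n) by lia. rewrite pow_n_S. cring.
Qed.

Lemma deriv_of_rem (f : C -> C) x l d K : 0 < d -> 0 <= K ->
  (forall h, Cmod h <= d -> Cmod (f (x+h) - f x - h*l)%C <= K * (Cmod h * Cmod h)) ->
  is_derive f x l.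
Proof.
  intros Hd HK H. split.
  - apply is_linear_scal_l.
  - intros x' Hx'. apply (@is_filter_lim_locally_unique _ (AbsRing_NormedModule C_AbsRing)) in Hx'. subst x'.
    intros eps.
    assert (He : 0 < Rmin d (eps / (K+1))).
    { apply Rmin_pos; auto. apply Rdiv_lt_0_compat. apply cond_pos. lra. }
    exists (mkposreal _ He). intros y Hy.
    change (Cmod (y - x)%C < Rmin d (eps / (K+1))) in Hy.
    change (norm (minus (minus (f y) (f x)) (scal (minus y x) l)) <= eps * norm (minus y x))
      with (Cmod (f y - f x - (y - x) * l)%C <= eps * Cmod (y - x)%C).
    set (h := (y - x)%C) in *.
    replace y with (x + h)%C by (unfold h; cring).
    assert (Hh1 : Cmod h <= d) by (assert (Rmin d (eps/(K+1)) <= d) by apply Rmin_l; lra).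
    assert (Hh2 : Cmod h <= eps/(K+1)) by (assert (Rmin d (eps/(K+1)) <= eps/(K+1)) by apply Rmin_r; lra).
    eapply Rle_trans. apply H; auto.
    assert (Hc := Cmod_ge_0 h). assert (He' := cond_pos eps).
    assert (K * Cmod h <= eps).
    { apply Rmult_le_reg_r with (/(K+1)). apply Rinv_0_lt_compat; lra.
      eapply Rle_trans. apply Rmult_le_compat_r. apply Rlt_le, Rinv_0_lt_compat; lra.
      apply Rmult_le_compat_l. auto. exact Hh2. unfold Rdiv.
      assert (K * (eps * / (K + 1)) * / (K + 1) <= eps * / (K+1)); [|lra].
      replace (K * (eps * / (K + 1)) * / (K + 1)) with ((eps * / (K+1)) * (K / (K+1))) by (field; lra).
      rewrite <- (Rmult_1_r (eps * / (K+1))) at 2. apply Rmult_le_compat_l.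
      apply Rlt_le, Rdiv_lt_0_compat; lra.
      apply Rmult_le_reg_r with (K+1). lra. unfold Rdiv. rewrite Rmult_assoc, Rinv_l; lra. }
    nra.
Qed.

Lemma sum_n_nonneg (u : nat -> R) n : (forall k, 0 <= u k) -> 0 <= sum_n u n.
Proof.
  intros H. induction n. rewrite sum_O; auto.
  unfold sum_n in *. rewrite sum_n_Sm by lia. change (plus ?a ?b) with (a + b). specialize (H (S n)). lra.
Qed.

Lemma Aco_ge0 a n : 0 <= Aco a n.
Proof. unfold Aco. apply sum_n_nonneg; intro. apply sum_n_nonneg; intro. apply Cmod_ge_0. Qed.

Lemma sum_n_ge_term (u : nat -> R) n k : (forall k, 0 <= u k) -> (k <= n)%nat -> u k <= sum_n u n.
Proof.
  intros H Hk. induction n.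
  - assert (k = 0%nat) by lia. subst. rewrite sum_O. lra.
  - unfold sum_n in *. rewrite sum_n_Sm by lia. change (plus ?a ?b) with (a + b).
    destruct (Nat.eq_dec k (S n)).
    + subst. assert (0 <= sum_n_m u 0 n) by (apply sum_n_nonneg; auto). lra.
    + assert (u k <= sum_n_m u 0 n) by (apply IHn; lia). specialize (H (S n)). lra.
Qed.

Lemma conv_bound a : convergent a -> exists R0 B, 0 < R0 /\ forall n, Aco a n * R0 ^ n <= B.
Proof.
  intros [r0 [Hr Hs]]. exists r0.
  set (u := fun k => sum_n (fun i => sum_n (fun j => Cmod (a i j (k - i - j)%nat)) (k - i)%nat) k * r0 ^ k).
  assert (Hu : forall k, 0 <= u k).
  { intro k. unfold u. apply Rmult_le_pos. apply Aco_ge0. apply pow_le. lra. }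
  apply ex_series_lim_0 in Hs. apply is_lim_seq_spec in Hs.
  destruct (Hs (mkposreal 1 Rlt_0_1)) as [N HN].
  exists (sum_n u N + 1). split; auto. intro n. change (u n <= sum_n u N + 1).
  destruct (Compare_dec.le_lt_dec n N).
  - assert (u n <= sum_n u N) by (apply sum_n_ge_term; auto). lra.
  - specialize (HN n ltac:(lia)). simpl in HN. fold u in HN.
    assert (0 <= sum_n u N) by (apply sum_n_nonneg; auto).
    assert (u n < 1). { unfold u. apply Rabs_lt_between in HN. lra. } lra.
Qed.

Lemma ex_series_geom_dom (c : nat -> R) (C0 q : R) :
  0 <= q < 1 -> (forall k, 0 <= c k <= C0 * q ^ k) -> ex_series c.
Proof.
  intros Hq H.
  apply (ex_series_le (K := R_AbsRing) (V := R_CompleteNormedModule) c (fun k => C0 * q ^ k)).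
  - intro k. change (norm (c k)) with (Rabs (c k)). rewrite Rabs_pos_eq; apply H.
  - apply (ex_series_scal_l (V := R_NormedModule) C0 (fun k => q ^ k)). apply ex_series_geom. rewrite Rabs_pos_eq; lra.
Qed.

Definition cu (a : coeffs) (m : nat) (rho S : R) (k : nat) : R :=
  2 ^ (m + k) * rho ^ k * Aco a (m + k) * S ^ (m + k).
Definition ct (a : coeffs) (m : nat) (rho S : R) (k : nat) : R :=
  (3/2) ^ k * (2 * rho) ^ k * Aco a (m + k) * S ^ (m + k).

Lemma cu_ge0 a m rho S k : 0 <= rho -> 0 <= S -> 0 <= cu a m rho S k.
Proof.
  intros. unfold cu. repeat apply Rmult_le_pos; try apply pow_le; try lra. apply Aco_ge0.
Qed.
Lemma ct_ge0 a m rho S k : 0 <= rho -> 0 <= S -> 0 <= ct a m rho S k.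
Proof.
  intros. unfold ct. repeat apply Rmult_le_pos; try apply pow_le; try lra. apply Aco_ge0.
Qed.

Lemma Aco_bound a R0 B n : 0 < R0 -> (forall n, Aco a n * R0 ^ n <= B) -> Aco a n <= B / R0 ^ n.
Proof.
  intros HR HB. specialize (HB n). assert (0 < R0 ^ n) by (apply pow_lt; lra).
  apply Rmult_le_reg_r with (R0 ^ n); auto. unfold Rdiv. rewrite Rmult_assoc, Rinv_l; lra.
Qed.

Lemma cu_summable a m rho S R0 B : 0 < R0 -> 0 <= rho -> 0 <= S -> 6 * S * rho <= R0 ->
  (forall n, Aco a n * R0 ^ n <= B) -> ex_series (cu a m rho S).
Proof.
  intros HR Hr HS Hrs HB.
  apply ex_series_geom_dom with (C0 := B * (2 * S / R0) ^ m) (q := 2 * S * rho / R0).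
  - split. apply Rmult_le_pos. nra. apply Rlt_le, Rinv_0_lt_compat; lra.
    apply Rmult_lt_reg_r with R0; auto. unfold Rdiv. rewrite Rmult_assoc, Rinv_l; lra.
  - intro k. split. apply cu_ge0; auto.
    unfold cu. assert (H := Aco_bound a R0 B (m+k) HR HB).
    assert (HA := Aco_ge0 a (m+k)).
    assert (HP : 0 < R0 ^ (m + k)) by (apply pow_lt; lra).
    eapply Rle_trans.
    { apply Rmult_le_compat_r. apply pow_le; auto.
      apply Rmult_le_compat_l. apply Rmult_le_pos; apply pow_le; lra. exact H. }
    right. unfold Rdiv. rewrite !Rpow_mult_distr, !pow_add, !pow_inv.
    field. repeat split; apply pow_nonzero; lra.
Qed.

Lemma ct_summable a m rho S R0 B : 0 < R0 -> 0 <= rho -> 0 <= S -> 6 * S * rho <= R0 ->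
  (forall n, Aco a n * R0 ^ n <= B) -> ex_series (ct a m rho S).
Proof.
  intros HR Hr HS Hrs HB.
  apply ex_series_geom_dom with (C0 := B * (S / R0) ^ m) (q := 3 * S * rho / R0).
  - split. apply Rmult_le_pos. nra. apply Rlt_le, Rinv_0_lt_compat; lra.
    apply Rmult_lt_reg_r with R0; auto. unfold Rdiv. rewrite Rmult_assoc, Rinv_l; lra.
  - intro k. split. apply ct_ge0; auto.
    unfold ct. assert (H := Aco_bound a R0 B (m+k) HR HB).
    assert (HA := Aco_ge0 a (m+k)).
    assert (HP : 0 < R0 ^ (m + k)) by (apply pow_lt; lra).
    eapply Rle_trans.
    { apply Rmult_le_compat_r. apply pow_le; auto.
      apply Rmult_le_compat_l. apply Rmult_le_pos; apply pow_le; lra. exact H. }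
    right. unfold Rdiv. rewrite !Rpow_mult_distr, !pow_add, !pow_inv.
    field. repeat split; apply pow_nonzero; lra.
Qed.

Lemma Cmod_pow_n (t : C) k : Cmod (pow_n t k) = Cmod t ^ k.
Proof.
  induction k. rewrite pow_n_O. simpl. apply Cmod_1.
  rewrite pow_n_S, Cmod_mult, IHk. reflexivity.
Qed.

Lemma PB_S_nonneg h F0 F1 Fh M g r : PB h F0 F1 Fh M g r -> 0 <= M.
Proof. intros [A _]. eapply Rle_trans; [apply Cmod_ge_0|exact A]. Qed.

Lemma term_sp a m rho S h t p b ph x k : 0 <= x -> 0 <= rho -> Cmod t <= rho ->
  compat h p b ph S 2 x ->
  Cmod (pow_n t k * hom a (m+k) ph - pow_n t k * hom a (m+k) p)%C <= cu a m rho S k * x /\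
  Cmod (pow_n t k * hom a (m+k) ph - pow_n t k * hom a (m+k) p - h * (pow_n t k * dhom a (m+k) p b))%C
    <= cu a m rho S k * (x*x).
Proof.
  intros Hx Hr Ht Hc.
  assert (HP := PB_hom h p b ph S 2 x a (m+k) ltac:(lra) Hx Hc).
  assert (HS : 0 <= S).
  { destruct Hc as [[A _] _]. eapply Rle_trans; [apply Cmod_ge_0|exact A]. }
  assert (H1 : 1 <= 2 ^ (m+k)) by (apply pow_R1_Rle; lra).
  apply (PB_scal _ (pow_n t k)) in HP; auto.
  destruct HP as [_ [_ [L K]]].
  assert (HA := Aco_ge0 a (m+k)).
  assert (Hb : (2 ^ (m + k) - 1) * (Cmod (pow_n t k) * (Aco a (m + k) * S ^ (m + k))) <= cu a m rho S k).
  { unfold cu. rewrite Cmod_pow_n.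
    assert (Cmod t ^ k <= rho ^ k) by (apply pow_incr; split; auto; apply Cmod_ge_0).
    assert (0 <= Cmod t ^ k) by (apply pow_le, Cmod_ge_0).
    assert (0 <= S ^ (m+k)) by (apply pow_le; auto).
    assert (0 <= Aco a (m + k) * S ^ (m + k)) by (apply Rmult_le_pos; auto).
    assert ((2 ^ (m + k) - 1) * (Cmod t ^ k * (Aco a (m + k) * S ^ (m + k))) <=
            2 ^ (m + k) * (rho ^ k * (Aco a (m + k) * S ^ (m + k)))).
    { apply Rmult_le_compat; try lra. apply Rmult_le_pos; auto. apply Rmult_le_compat_r; auto. }
    lra. }
  split.
  - eapply Rle_trans. exact L. apply Rmult_le_compat_r; auto.
  - eapply Rle_trans. exact K. apply Rmult_le_compat_r; [nra|auto].
Qed.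

Lemma hom_bound a n p S : Cmod (p1 p) <= S -> Cmod (p2 p) <= S -> Cmod (p3 p) <= S ->
  Cmod (hom a n p) <= Aco a n * S ^ n.
Proof.
  intros H1 H2 H3.
  assert (Hc : compat (RtoC 0) p p p S 1 0).
  { unfold compat. rewrite Cmod_0, !Rmult_0_r.
    repeat split; auto; try lra; ring. }
  destruct (PB_hom _ _ _ _ _ _ _ a n (Rle_refl 1) (Rle_refl 0) Hc) as [A _]. exact A.
Qed.

Lemma term_t a m rho S h t c k : 0 < rho -> Cmod t <= rho -> Cmod h <= rho ->
  Cmod c <= Aco a (m+k) * S ^ (m+k) ->
  Cmod (pow_n (t+h) k * c - pow_n t k * c)%C <= ct a m rho S k * (Cmod h / rho) /\
  Cmod (pow_n (t+h) k * c - pow_n t k * c - h * (RtoC (INR k) * pow_n t (k-1) * c))%C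
    <= ct a m rho S k * ((Cmod h / rho) * (Cmod h / rho)).
Proof.
  intros Hr Ht Hh Hc.
  set (x := Cmod h / rho).
  assert (Hx : 0 <= x) by (unfold x; apply Rmult_le_pos; [apply Cmod_ge_0|apply Rlt_le, Rinv_0_lt_compat; auto]).
  assert (HA : PB h t (RtoC 1) (t + h * RtoC 1)%C (2 * rho) (3/2) x).
  { apply PB_affine; try lra.
    - replace (t + h * RtoC 1)%C with (t + h)%C by cring.
      eapply Rle_trans. apply Cmod_triangle. lra.
    - rewrite Cmod_1. unfold x. right. field. lra. }
  apply (PB_pow _ _ _ _ _ _ _ k) in HA; [|lra|auto].
  apply (PB_scal _ c) in HA; [|apply pow_R1_Rle; lra|auto].
  destruct HA as [_ [_ [L K]]].
  assert (HS : 0 <= Aco a (m+k) * S^(m+k)) by (eapply Rle_trans; [apply Cmod_ge_0|exact Hc]).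
  assert (Hb : ((3/2) ^ k - 1) * (Cmod c * (2 * rho) ^ k) <= ct a m rho S k).
  { unfold ct.
    assert (H1 : 1 <= (3/2) ^ k) by (apply pow_R1_Rle; lra).
    assert (0 <= (2*rho)^k) by (apply pow_le; lra).
    assert (Cmod c * (2 * rho) ^ k <= Aco a (m+k) * S^(m+k) * (2*rho)^k) by (apply Rmult_le_compat_r; auto).
    assert (0 <= Cmod c) by apply Cmod_ge_0.
    assert (((3/2) ^ k - 1) * (Cmod c * (2 * rho) ^ k) <= (3/2)^k * (Aco a (m+k) * S^(m+k) * (2*rho)^k)).
    { apply Rmult_le_compat; try lra. apply Rmult_le_pos; lra. }
    lra. }
  split.
  - replace (pow_n (t+h) k * c - pow_n t k * c)%C with
      (c * pow_n (t + h * RtoC 1) k - c * pow_n t k)%C by (replace (t + h * RtoC 1)%C with (t + h)%C by ring; ring).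
    eapply Rle_trans. exact L. apply Rmult_le_compat_r; auto.
  - replace (pow_n (t+h) k * c - pow_n t k * c - h * (RtoC (INR k) * pow_n t (k-1) * c))%C with
      (c * pow_n (t + h * RtoC 1) k - c * pow_n t k - h * (c * (RtoC (INR k) * pow_n t (k - 1) * RtoC 1)))%C
      by (replace (t + h * RtoC 1)%C with (t + h)%C by ring; ring).
    eapply Rle_trans. exact K. apply Rmult_le_compat_r; [nra|auto].
Qed.

Lemma GS (T0 Th D : nat -> C) (c : nat -> R) (X0 Xh Dsum h : C) (x Cs : R) :
  is_series T0 X0 -> is_series Th Xh -> is_series c Cs -> is_series D Dsum ->
  (forall k, Cmod (Th k - T0 k)%C <= c k * x /\ Cmod (Th k - T0 k - h * D k)%C <= c k * (x*x)) ->
  Cmod (Xh - X0)%C <= Cs * x /\ Cmod (Xh - X0 - h * Dsum)%C <= Cs * (x*x).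
Proof.
  intros H0 Hh Hc HD H. split.
  - apply (series_norm_le (fun k => Th k - T0 k)%C (fun k => c k * x)).
    + apply (is_series_minus Th T0 Xh X0); auto.
    + apply (is_series_scal_r x c Cs Hc).
    + intro k; apply H.
  - apply (series_norm_le (fun k => Th k - T0 k - h * D k)%C (fun k => c k * (x*x))).
    + apply (is_series_minus (fun k => Th k - T0 k)%C (fun k => h * D k)%C (Xh - X0)%C (h * Dsum)%C).
      apply (is_series_minus Th T0 Xh X0); auto.
      apply (is_series_scal h D Dsum HD).
    + apply (is_series_scal_r (x*x) c Cs Hc).
    + intro k; apply H.
Qed.

Lemma D_exists (T0 Th D : nat -> C) (c : nat -> R) (h : C) (x : R) :
  h <> RtoC 0 -> 0 <= x -> ex_series c ->
  (forall k, Cmod (Th k - T0 k)%C <= c k * x /\ Cmod (Th k - T0 k - h * D k)%C <= c k * (x*x)) ->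
  exists Dsum, is_series D Dsum.
Proof.
  intros Hh Hx Hc H.
  assert (Hm : 0 < Cmod h) by (apply Cmod_gt_0; auto).
  assert (E : ex_series (V := C_CompleteNormedModule) D).
  { apply (ex_series_le (V := C_CompleteNormedModule) D (fun k => c k * ((x + x*x) / Cmod h))).
    - intro k. change (norm (D k)) with (Cmod (D k)).
      destruct (H k) as [A B].
      replace (D k) with (/ h * ((Th k - T0 k) - (Th k - T0 k - h * D k)))%C
        by (match goal with |- ?x = ?y => change (@eq C x y) end; field; auto).
      rewrite Cmod_mult, Cmod_inv by auto.
      assert (Cmod (Th k - T0 k - (Th k - T0 k - h * D k))%C <= c k * x + c k * (x*x)).
      { unfold Cminus at 1. eapply Rle_trans. apply Cmod_triangle. rewrite Cmod_opp. lra. }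
      unfold Rdiv. rewrite (Rmult_comm (/ Cmod h)).
      replace (c k * ((x + x * x) * / Cmod h)) with ((c k * x + c k * (x * x)) * / Cmod h) by ring.
      apply Rmult_le_compat_r. apply Rlt_le, Rinv_0_lt_compat; auto. auto.
    - apply (ex_series_scal_r ((x + x*x) / Cmod h) c Hc). }
  destruct E as [l Hl]. exists l. exact Hl.
Qed.

Definition Nq (q b1 b2 : C3) : R :=
  1 + Cmod (p1 q) + Cmod (p2 q) + Cmod (p3 q) + Cmod (p1 b1) + Cmod (p2 b1) + Cmod (p3 b1)
    + Cmod (p1 b2) + Cmod (p2 b2) + Cmod (p3 b2).

Lemma Nq_ge q b1 b2 : 1 <= Nq q b1 b2 /\
  Cmod (p1 q) <= Nq q b1 b2 /\ Cmod (p2 q) <= Nq q b1 b2 /\ Cmod (p3 q) <= Nq q b1 b2 /\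
  Cmod (p1 b1) <= Nq q b1 b2 /\ Cmod (p2 b1) <= Nq q b1 b2 /\ Cmod (p3 b1) <= Nq q b1 b2 /\
  Cmod (p1 b2) <= Nq q b1 b2 /\ Cmod (p2 b2) <= Nq q b1 b2 /\ Cmod (p3 b2) <= Nq q b1 b2.
Proof.
  unfold Nq.
  pose proof (Cmod_ge_0 (p1 q)). pose proof (Cmod_ge_0 (p2 q)). pose proof (Cmod_ge_0 (p3 q)).
  pose proof (Cmod_ge_0 (p1 b1)). pose proof (Cmod_ge_0 (p2 b1)). pose proof (Cmod_ge_0 (p3 b1)).
  pose proof (Cmod_ge_0 (p1 b2)). pose proof (Cmod_ge_0 (p2 b2)). pose proof (Cmod_ge_0 (p3 b2)).
  repeat split; lra.
Qed.

Lemma comp_bound (x y z u v : C) N : Cmod u <= 1 -> Cmod v <= 1 ->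
  Cmod x <= N -> Cmod y <= N -> Cmod z <= N -> Cmod (x + u*y + v*z)%C <= 3 * N.
Proof.
  intros Hu Hv Hx Hy Hz.
  eapply Rle_trans. apply Cmod_triangle. eapply Rle_trans. apply Rplus_le_compat_r, Cmod_triangle.
  rewrite !Cmod_mult.
  assert (0 <= Cmod u) by apply Cmod_ge_0. assert (0 <= Cmod v) by apply Cmod_ge_0.
  assert (0 <= Cmod y) by apply Cmod_ge_0. assert (0 <= Cmod z) by apply Cmod_ge_0.
  assert (Cmod u * Cmod y <= 1 * N) by (apply Rmult_le_compat; auto).
  assert (Cmod v * Cmod z <= 1 * N) by (apply Rmult_le_compat; auto).
  lra.
Qed.

Lemma chart_bound q b1 b2 u v : Cmod u <= 1 -> Cmod v <= 1 ->
  Cmod (p1 (chartpt q b1 b2 u v)) <= 3 * Nq q b1 b2 /\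
  Cmod (p2 (chartpt q b1 b2 u v)) <= 3 * Nq q b1 b2 /\
  Cmod (p3 (chartpt q b1 b2 u v)) <= 3 * Nq q b1 b2.
Proof.
  intros Hu Hv. destruct (Nq_ge q b1 b2) as [H0 [H1 [H2 [H3 [H4 [H5 [H6 [H7 [H8 H9]]]]]]]]].
  repeat split; apply comp_bound; auto.
Qed.

Lemma compat_u q b1 b2 u v h rho : 0 < rho <= 1/2 -> Cmod u < rho -> Cmod v < rho -> Cmod h <= rho ->
  compat h (chartpt q b1 b2 u v) b1 (chartpt q b1 b2 (u+h)%C v) (3 * Nq q b1 b2) 2 (Cmod h / rho).
Proof.
  intros Hr Hu Hv Hh.
  assert (Huh : Cmod (u+h)%C <= 1) by (eapply Rle_trans; [apply Cmod_triangle|lra]).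
  destruct (chart_bound q b1 b2 u v ltac:(lra) ltac:(lra)) as [A1 [A2 A3]].
  destruct (chart_bound q b1 b2 (u+h) v Huh ltac:(lra)) as [B1 [B2 B3]].
  destruct (Nq_ge q b1 b2) as [H0 [H1 [H2 [H3 [H4 [H5 [H6 [H7 [H8 H9]]]]]]]]].
  assert (Hx : forall y, Cmod y <= Nq q b1 b2 -> Cmod y * Cmod h <= (2-1) * (3 * Nq q b1 b2) * (Cmod h / rho)).
  { intros y Hy. assert (0 <= Cmod h) by apply Cmod_ge_0.
    assert (Cmod h <= Cmod h / rho).
    { unfold Rdiv. rewrite <- (Rmult_1_r (Cmod h)) at 1. apply Rmult_le_compat_l; auto.
      rewrite <- Rinv_1. apply Rinv_le_contravar; lra. }
    assert (Cmod y * Cmod h <= Nq q b1 b2 * (Cmod h / rho)).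
    { apply Rmult_le_compat; auto. apply Cmod_ge_0. }
    assert (0 <= Nq q b1 b2 * (Cmod h / rho)) by (apply Rmult_le_pos; lra).
    lra. }
  unfold compat. repeat split; auto; try apply Hx; auto.
  all: unfold chartpt, p1, p2, p3; cbn [fst snd]. all: cr.
Qed.

Lemma compat_v q b1 b2 u v h rho : 0 < rho <= 1/2 -> Cmod u < rho -> Cmod v < rho -> Cmod h <= rho ->
  compat h (chartpt q b1 b2 u v) b2 (chartpt q b1 b2 u (v+h)%C) (3 * Nq q b1 b2) 2 (Cmod h / rho).
Proof.
  intros Hr Hu Hv Hh.
  assert (Huh : Cmod (v+h)%C <= 1) by (eapply Rle_trans; [apply Cmod_triangle|lra]).
  destruct (chart_bound q b1 b2 u v ltac:(lra) ltac:(lra)) as [A1 [A2 A3]].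
  destruct (chart_bound q b1 b2 u (v+h) ltac:(lra) Huh) as [B1 [B2 B3]].
  destruct (Nq_ge q b1 b2) as [H0 [H1 [H2 [H3 [H4 [H5 [H6 [H7 [H8 H9]]]]]]]]].
  assert (Hx : forall y, Cmod y <= Nq q b1 b2 -> Cmod y * Cmod h <= (2-1) * (3 * Nq q b1 b2) * (Cmod h / rho)).
  { intros y Hy. assert (0 <= Cmod h) by apply Cmod_ge_0.
    assert (Cmod h <= Cmod h / rho).
    { unfold Rdiv. rewrite <- (Rmult_1_r (Cmod h)) at 1. apply Rmult_le_compat_l; auto.
      rewrite <- Rinv_1. apply Rinv_le_contravar; lra. }
    assert (Cmod y * Cmod h <= Nq q b1 b2 * (Cmod h / rho)).
    { apply Rmult_le_compat; auto. apply Cmod_ge_0. }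
    assert (0 <= Nq q b1 b2 * (Cmod h / rho)) by (apply Rmult_le_pos; lra).
    lra. }
  unfold compat. repeat split; auto; try apply Hx; auto.
  all: unfold chartpt, p1, p2, p3; cbn [fst snd]. all: cr.
Qed.

Definition Gser (a : coeffs) m q b1 b2 (G : C3 -> CC) r : Prop :=
  forall u v t, Cmod u < r -> Cmod v < r -> Cmod t < r ->
    is_series (fun k => pow_n t k * hom a (m + k) (chartpt q b1 b2 u v))%C (G (u, v, t)).

Definition Setup (a : coeffs) m q b1 b2 (G : C3 -> CC) rho : Prop :=
  exists r R0 B, Gser a m q b1 b2 G r /\ 0 < R0 /\ (forall n, Aco a n * R0 ^ n <= B) /\
    0 < rho <= 1/2 /\ 2 * rho <= r /\ 6 * (3 * Nq q b1 b2) * rho <= R0.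

Lemma series_nonneg (c : nat -> R) Cs : is_series c Cs -> (forall k, 0 <= c k) -> 0 <= Cs.
Proof.
  intros H Hc.
  assert (B := @filterlim_le nat eventually (Proper_StrongProper _ eventually_filter)
     (fun _ => 0) (sum_n c) 0 Cs).
  simpl in B. apply B; auto.
  exists 0%nat. intros n _. apply sum_n_nonneg. auto.
  apply filterlim_const.
Qed.

Lemma Cmod_RtoC_pos (x : R) : 0 <= x -> Cmod (RtoC x) = x.
Proof. intros. rewrite Cmod_R. apply Rabs_pos_eq; auto. Qed.

Lemma RtoC_neq0 (x : R) : 0 < x -> RtoC x <> RtoC 0.
Proof. intros H E. apply RtoC_inj in E. lra. Qed.

Lemma Ks_bound (Cs rho h : R) : 0 <= Cs -> 0 < rho -> 0 <= h ->
  Cs * (h / rho) <= (Cs / rho + Cs / (rho * rho)) * h /\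
  Cs * ((h / rho) * (h / rho)) <= (Cs / rho + Cs / (rho * rho)) * (h * h).
Proof.
  intros. assert (0 <= Cs / rho) by (apply Rmult_le_pos; [lra|apply Rlt_le, Rinv_0_lt_compat; lra]).
  assert (0 <= Cs / (rho*rho)) by (apply Rmult_le_pos; [lra|apply Rlt_le, Rinv_0_lt_compat; nra]).
  split.
  - replace (Cs * (h / rho)) with (Cs / rho * h) by (field; lra). nra.
  - replace (Cs * ((h / rho) * (h / rho))) with (Cs / (rho * rho) * (h * h)) by (field; lra). nra.
Qed.

Lemma core_u a m q b1 b2 G rho : Setup a m q b1 b2 G rho ->
  exists Ks, 0 <= Ks /\ forall u v t, Cmod u < rho -> Cmod v < rho -> Cmod t < rho ->
  exists D, is_series (fun k => pow_n t k * dhom a (m+k) (chartpt q b1 b2 u v) b1)%C D /\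
  forall h, Cmod h <= rho ->
    Cmod (G ((u+h)%C, v, t) - G (u, v, t))%C <= Ks * Cmod h /\
    Cmod (G ((u+h)%C, v, t) - G (u, v, t) - h * D)%C <= Ks * (Cmod h * Cmod h).
Proof.
  intros [r [R0 [B [HG [HR0 [HB [Hrho [Hr HR]]]]]]]].
  set (S := 3 * Nq q b1 b2).
  assert (HS : 0 <= S) by (unfold S; destruct (Nq_ge q b1 b2); lra).
  destruct (cu_summable a m rho S R0 B HR0 ltac:(lra) HS ltac:(unfold S in *; lra) HB) as [Cs HCs].
  assert (HCs0 : 0 <= Cs) by (apply (series_nonneg _ _ HCs); intro; apply cu_ge0; lra).
  exists (Cs / rho + Cs / (rho * rho)). split.
  { apply Rplus_le_le_0_compat; apply Rmult_le_pos; try lra; apply Rlt_le, Rinv_0_lt_compat; nra. }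
  intros u v t Hu Hv Ht.
  assert (TB : forall h, Cmod h <= rho -> forall k,
    Cmod (pow_n t k * hom a (m+k) (chartpt q b1 b2 (u+h)%C v) - pow_n t k * hom a (m+k) (chartpt q b1 b2 u v))%C
      <= cu a m rho S k * (Cmod h / rho) /\
    Cmod (pow_n t k * hom a (m+k) (chartpt q b1 b2 (u+h)%C v) - pow_n t k * hom a (m+k) (chartpt q b1 b2 u v)
      - h * (pow_n t k * dhom a (m+k) (chartpt q b1 b2 u v) b1))%C <= cu a m rho S k * ((Cmod h / rho) * (Cmod h / rho))).
  { intros h Hh k. apply term_sp; try lra.
    apply Rmult_le_pos. apply Cmod_ge_0. apply Rlt_le, Rinv_0_lt_compat; lra.
    apply compat_u; auto; lra. }
  assert (Hr0 : Cmod (RtoC rho) = rho) by (apply Cmod_RtoC_pos; lra).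
  destruct (D_exists _ _ _ _ (RtoC rho) (Cmod (RtoC rho) / rho) (RtoC_neq0 rho ltac:(lra))
    ltac:(rewrite Hr0; apply Rle_0_1 || (unfold Rdiv; rewrite Rinv_r; lra))
    (ex_intro _ Cs HCs) (TB (RtoC rho) ltac:(lra))) as [D HD].
  exists D. split; auto.
  intros h Hh.
  assert (Hu' : Cmod (u + h)%C < r) by (eapply Rle_lt_trans; [apply Cmod_triangle|lra]).
  destruct (GS _ _ _ _ _ _ _ h (Cmod h / rho) Cs (HG u v t ltac:(lra) ltac:(lra) ltac:(lra))
     (HG (u+h)%C v t Hu' ltac:(lra) ltac:(lra)) HCs HD (TB h Hh)) as [A1 A2].
  destruct (Ks_bound Cs rho (Cmod h) HCs0 ltac:(lra) (Cmod_ge_0 h)) as [K1 K2].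
  split; lra.
Qed.

Lemma core_v a m q b1 b2 G rho : Setup a m q b1 b2 G rho ->
  exists Ks, 0 <= Ks /\ forall u v t, Cmod u < rho -> Cmod v < rho -> Cmod t < rho ->
  exists D, is_series (fun k => pow_n t k * dhom a (m+k) (chartpt q b1 b2 u v) b2)%C D /\
  forall h, Cmod h <= rho ->
    Cmod (G (u, (v+h)%C, t) - G (u, v, t))%C <= Ks * Cmod h /\
    Cmod (G (u, (v+h)%C, t) - G (u, v, t) - h * D)%C <= Ks * (Cmod h * Cmod h).
Proof.
  intros [r [R0 [B [HG [HR0 [HB [Hrho [Hr HR]]]]]]]].
  set (S := 3 * Nq q b1 b2).
  assert (HS : 0 <= S) by (unfold S; destruct (Nq_ge q b1 b2); lra).
  destruct (cu_summable a m rho S R0 B HR0 ltac:(lra) HS ltac:(unfold S in *; lra) HB) as [Cs HCs].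
  assert (HCs0 : 0 <= Cs) by (apply (series_nonneg _ _ HCs); intro; apply cu_ge0; lra).
  exists (Cs / rho + Cs / (rho * rho)). split.
  { apply Rplus_le_le_0_compat; apply Rmult_le_pos; try lra; apply Rlt_le, Rinv_0_lt_compat; nra. }
  intros u v t Hu Hv Ht.
  assert (TB : forall h, Cmod h <= rho -> forall k,
    Cmod (pow_n t k * hom a (m+k) (chartpt q b1 b2 u (v+h)%C) - pow_n t k * hom a (m+k) (chartpt q b1 b2 u v))%C
      <= cu a m rho S k * (Cmod h / rho) /\
    Cmod (pow_n t k * hom a (m+k) (chartpt q b1 b2 u (v+h)%C) - pow_n t k * hom a (m+k) (chartpt q b1 b2 u v)
      - h * (pow_n t k * dhom a (m+k) (chartpt q b1 b2 u v) b2))%C <= cu a m rho S k * ((Cmod h / rho) * (Cmod h / rho))).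
  { intros h Hh k. apply term_sp; try lra.
    apply Rmult_le_pos. apply Cmod_ge_0. apply Rlt_le, Rinv_0_lt_compat; lra.
    apply compat_v; auto; lra. }
  assert (Hr0 : Cmod (RtoC rho) = rho) by (apply Cmod_RtoC_pos; lra).
  destruct (D_exists _ _ _ _ (RtoC rho) (Cmod (RtoC rho) / rho) (RtoC_neq0 rho ltac:(lra))
    ltac:(rewrite Hr0; apply Rle_0_1 || (unfold Rdiv; rewrite Rinv_r; lra))
    (ex_intro _ Cs HCs) (TB (RtoC rho) ltac:(lra))) as [D HD].
  exists D. split; auto.
  intros h Hh.
  assert (Hv' : Cmod (v + h)%C < r) by (eapply Rle_lt_trans; [apply Cmod_triangle|lra]).
  destruct (GS _ _ _ _ _ _ _ h (Cmod h / rho) Cs (HG u v t ltac:(lra) ltac:(lra) ltac:(lra))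
     (HG u (v+h)%C t ltac:(lra) Hv' ltac:(lra)) HCs HD (TB h Hh)) as [A1 A2].
  destruct (Ks_bound Cs rho (Cmod h) HCs0 ltac:(lra) (Cmod_ge_0 h)) as [K1 K2].
  split; lra.
Qed.

Lemma core_t a m q b1 b2 G rho : Setup a m q b1 b2 G rho ->
  exists Ks, 0 <= Ks /\ forall u v t, Cmod u < rho -> Cmod v < rho -> Cmod t < rho ->
  exists D, is_series (fun k => RtoC (INR k) * pow_n t (k-1) * hom a (m+k) (chartpt q b1 b2 u v))%C D /\
  forall h, Cmod h <= rho ->
    Cmod (G (u, v, (t+h)%C) - G (u, v, t))%C <= Ks * Cmod h /\
    Cmod (G (u, v, (t+h)%C) - G (u, v, t) - h * D)%C <= Ks * (Cmod h * Cmod h).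
Proof.
  intros [r [R0 [B [HG [HR0 [HB [Hrho [Hr HR]]]]]]]].
  set (S := 3 * Nq q b1 b2).
  assert (HS : 0 <= S) by (unfold S; destruct (Nq_ge q b1 b2); lra).
  destruct (ct_summable a m rho S R0 B HR0 ltac:(lra) HS ltac:(unfold S in *; lra) HB) as [Cs HCs].
  assert (HCs0 : 0 <= Cs) by (apply (series_nonneg _ _ HCs); intro; apply ct_ge0; lra).
  exists (Cs / rho + Cs / (rho * rho)). split.
  { apply Rplus_le_le_0_compat; apply Rmult_le_pos; try lra; apply Rlt_le, Rinv_0_lt_compat; nra. }
  intros u v t Hu Hv Ht.
  assert (TB : forall h, Cmod h <= rho -> forall k,
    Cmod (pow_n (t+h) k * hom a (m+k) (chartpt q b1 b2 u v) - pow_n t k * hom a (m+k) (chartpt q b1 b2 u v))%C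
      <= ct a m rho S k * (Cmod h / rho) /\
    Cmod (pow_n (t+h) k * hom a (m+k) (chartpt q b1 b2 u v) - pow_n t k * hom a (m+k) (chartpt q b1 b2 u v)
      - h * (RtoC (INR k) * pow_n t (k-1) * hom a (m+k) (chartpt q b1 b2 u v)))%C
      <= ct a m rho S k * ((Cmod h / rho) * (Cmod h / rho))).
  { intros h Hh k. apply term_t; try lra.
    destruct (chart_bound q b1 b2 u v ltac:(lra) ltac:(lra)) as [A1 [A2 A3]].
    apply hom_bound; auto. }
  assert (Hr0 : Cmod (RtoC rho) = rho) by (apply Cmod_RtoC_pos; lra).
  destruct (D_exists _ _ _ _ (RtoC rho) (Cmod (RtoC rho) / rho) (RtoC_neq0 rho ltac:(lra))
    ltac:(rewrite Hr0; apply Rle_0_1 || (unfold Rdiv; rewrite Rinv_r; lra))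
    (ex_intro _ Cs HCs) (TB (RtoC rho) ltac:(lra))) as [D HD].
  exists D. split; auto.
  intros h Hh.
  assert (Ht' : Cmod (t + h)%C < r) by (eapply Rle_lt_trans; [apply Cmod_triangle|lra]).
  destruct (GS _ _ _ _ _ _ _ h (Cmod h / rho) Cs (HG u v t ltac:(lra) ltac:(lra) ltac:(lra))
     (HG u v (t+h)%C ltac:(lra) ltac:(lra) Ht') HCs HD (TB h Hh)) as [A1 A2].
  destruct (Ks_bound Cs rho (Cmod h) HCs0 ltac:(lra) (Cmod_ge_0 h)) as [K1 K2].
  split; lra.
Qed.

Definition RpU (G : C3 -> CC) rho K u v t D := forall h, Cmod h <= rho ->
  Cmod (G ((u+h)%C, v, t) - G (u, v, t) - h * D)%C <= K * (Cmod h * Cmod h).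
Definition RpV (G : C3 -> CC) rho K u v t D := forall h, Cmod h <= rho ->
  Cmod (G (u, (v+h)%C, t) - G (u, v, t) - h * D)%C <= K * (Cmod h * Cmod h).
Definition RpT (G : C3 -> CC) rho K u v t D := forall h, Cmod h <= rho ->
  Cmod (G (u, v, (t+h)%C) - G (u, v, t) - h * D)%C <= K * (Cmod h * Cmod h).

Definition LipAll (G : C3 -> CC) rho K := forall u v t, Cmod u < rho -> Cmod v < rho -> Cmod t < rho ->
  forall h, Cmod h <= rho ->
   Cmod (G ((u+h)%C, v, t) - G (u, v, t))%C <= K * Cmod h /\
   Cmod (G (u, (v+h)%C, t) - G (u, v, t))%C <= K * Cmod h /\
   Cmod (G (u, v, (t+h)%C) - G (u, v, t))%C <= K * Cmod h.

Definition DerAll (G : C3 -> CC) rho K := forall u v t, Cmod u < rho -> Cmod v < rho -> Cmod t < rho ->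
  (exists D, RpU G rho K u v t D) /\ (exists D, RpV G rho K u v t D) /\ (exists D, RpT G rho K u v t D).

Lemma Kmono a b c : 0 <= a -> 0 <= b -> 0 <= c -> a <= a + b + c /\ b <= a + b + c /\ c <= a + b + c.
Proof. intros; lra. Qed.

Lemma core_all a m q b1 b2 G rho : Setup a m q b1 b2 G rho ->
  exists K, 0 <= K /\ LipAll G rho K /\ DerAll G rho K /\
  (forall Du, is_series (fun k => pow_n c0 k * dhom a (m+k) (chartpt q b1 b2 c0 c0) b1)%C Du -> RpU G rho K c0 c0 c0 Du) /\
  (forall Dv, is_series (fun k => pow_n c0 k * dhom a (m+k) (chartpt q b1 b2 c0 c0) b2)%C Dv -> RpV G rho K c0 c0 c0 Dv) /\
  (forall Dt, is_series (fun k => RtoC (INR k) * pow_n c0 (k-1) * hom a (m+k) (chartpt q b1 b2 c0 c0))%C Dt -> RpT G rho K c0 c0 c0 Dt).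
Proof.
  intros HS. assert (Hrho : 0 < rho) by (destruct HS as [? [? [? [_ [_ [_ [H _]]]]]]]; lra).
  destruct (core_u _ _ _ _ _ _ _ HS) as [Ku [Ku0 HU]].
  destruct (core_v _ _ _ _ _ _ _ HS) as [Kv [Kv0 HV]].
  destruct (core_t _ _ _ _ _ _ _ HS) as [Kt [Kt0 HT]].
  exists (Ku + Kv + Kt). destruct (Kmono Ku Kv Kt Ku0 Kv0 Kt0) as [E1 [E2 E3]].
  assert (M : forall K K' x, 0 <= x -> K <= K' -> K * x <= K' * x) by (intros; apply Rmult_le_compat_r; auto).
  assert (Mh : forall h : C, 0 <= Cmod h * Cmod h) by (intros; apply Rmult_le_pos; apply Cmod_ge_0).
  assert (Hc0 : Cmod c0 < rho) by (unfold c0; rewrite Cmod_0; lra).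
  split; [lra|split; [|split; [|split; [|split]]]].
  - intros u v t Hu Hv Ht h Hh.
    destruct (HU u v t Hu Hv Ht) as [D1 [_ H1]]. destruct (HV u v t Hu Hv Ht) as [D2 [_ H2]].
    destruct (HT u v t Hu Hv Ht) as [D3 [_ H3]].
    destruct (H1 h Hh) as [A _]. destruct (H2 h Hh) as [B _]. destruct (H3 h Hh) as [C' _].
    assert (0 <= Cmod h) by apply Cmod_ge_0.
    repeat split; eapply Rle_trans; eauto.
  - intros u v t Hu Hv Ht.
    destruct (HU u v t Hu Hv Ht) as [D1 [_ H1]]. destruct (HV u v t Hu Hv Ht) as [D2 [_ H2]].
    destruct (HT u v t Hu Hv Ht) as [D3 [_ H3]].
    split; [exists D1|split; [exists D2|exists D3]]; intros h Hh;
    [destruct (H1 h Hh) as [_ A]|destruct (H2 h Hh) as [_ A]|destruct (H3 h Hh) as [_ A]];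
    eapply Rle_trans; eauto.
  - intros Du HDu. destruct (HU c0 c0 c0 Hc0 Hc0 Hc0) as [D1 [HD1 H1]].
    assert (D1 = Du) by (eapply series_unique; eauto). subst.
    intros h Hh. destruct (H1 h Hh) as [_ A]. eapply Rle_trans; eauto.
  - intros Dv HDv. destruct (HV c0 c0 c0 Hc0 Hc0 Hc0) as [D1 [HD1 H1]].
    assert (D1 = Dv) by (eapply series_unique; eauto). subst.
    intros h Hh. destruct (H1 h Hh) as [_ A]. eapply Rle_trans; eauto.
  - intros Dt HDt. destruct (HT c0 c0 c0 Hc0 Hc0 Hc0) as [D1 [HD1 H1]].
    assert (D1 = Dt) by (eapply series_unique; eauto). subst.
    intros h Hh. destruct (H1 h Hh) as [_ A]. eapply Rle_trans; eauto.
Qed.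

Lemma cmod_diff_lt (x y : C) rho : Cmod x < rho / 2 -> Cmod y < rho / 2 -> Cmod (y - x)%C < rho.
Proof.
  intros. unfold Cminus. eapply Rle_lt_trans. apply Cmod_triangle. rewrite Cmod_opp. lra.
Qed.

Lemma lipG G rho K : 0 < rho -> 0 <= K -> LipAll G rho K ->
  forall u v t u' v' t', Cmod u < rho/2 -> Cmod v < rho/2 -> Cmod t < rho/2 ->
  Cmod u' < rho/2 -> Cmod v' < rho/2 -> Cmod t' < rho/2 ->
  Cmod (G (u', v', t') - G (u, v, t))%C <= K * (Cmod (u' - u)%C + Cmod (v' - v)%C + Cmod (t' - t)%C).
Proof.
  intros Hr HK HL u v t u' v' t' Hu Hv Ht Hu' Hv' Ht'.
  destruct (HL u' v' t ltac:(lra) ltac:(lra) ltac:(lra) (t' - t)%C ltac:(apply Rlt_le, cmod_diff_lt; auto)) as [_ [_ S1]].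
  destruct (HL u' v t ltac:(lra) ltac:(lra) ltac:(lra) (v' - v)%C ltac:(apply Rlt_le, cmod_diff_lt; auto)) as [_ [S2 _]].
  destruct (HL u v t ltac:(lra) ltac:(lra) ltac:(lra) (u' - u)%C ltac:(apply Rlt_le, cmod_diff_lt; auto)) as [S3 _].
  replace (t + (t' - t))%C with t' in S1 by cr.
  replace (v + (v' - v))%C with v' in S2 by cr.
  replace (u + (u' - u))%C with u' in S3 by cr.
  replace (G (u', v', t') - G (u, v, t))%C with
    ((G (u', v', t') - G (u', v', t)) + (G (u', v', t) - G (u', v, t)) + (G (u', v, t) - G (u, v, t)))%C by cr.
  eapply Rle_trans. apply Cmod_triangle. eapply Rle_trans. apply Rplus_le_compat_r, Cmod_triangle.
  lra.
Qed.

Lemma pd1_of G rho K u v t D : 0 < rho -> 0 <= K -> RpU G rho K u v t D -> pd1 G (u, v, t) D.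
Proof. intros Hr HK H. unfold pd1. apply (deriv_of_rem _ _ _ rho K Hr HK). intros h Hh. apply H; auto. Qed.
Lemma pd2_of G rho K u v t D : 0 < rho -> 0 <= K -> RpV G rho K u v t D -> pd2 G (u, v, t) D.
Proof. intros Hr HK H. unfold pd2. apply (deriv_of_rem _ _ _ rho K Hr HK). intros h Hh. apply H; auto. Qed.
Lemma pd3_of G rho K u v t D : 0 < rho -> 0 <= K -> RpT G rho K u v t D -> pd3 G (u, v, t) D.
Proof. intros Hr HK H. unfold pd3. apply (deriv_of_rem _ _ _ rho K Hr HK). intros h Hh. apply H; auto. Qed.

Lemma cm4 (a b c d : C) : Cmod (a - b - c + d)%C <= Cmod a + Cmod b + Cmod c + Cmod d.
Proof.
  unfold Cminus.
  assert (H1 := Cmod_triangle (a + - b + - c) d).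
  assert (H2 := Cmod_triangle (a + - b) (- c)).
  assert (H3 := Cmod_triangle a (- b)).
  rewrite Cmod_opp in H2, H3. lra.
Qed.

Lemma dalg (A0 A1 B0 B1 D D0 h0 : C) X R :
  Cmod (A1 - A0 - h0*D)%C <= R -> Cmod (B1 - B0 - h0*D0)%C <= R ->
  Cmod (A1 - B1)%C <= X -> Cmod (A0 - B0)%C <= X -> Cmod h0 * Cmod (D - D0)%C <= 2*X + 2*R.
Proof.
  intros H1 H2 H3 H4. rewrite <- Cmod_mult.
  replace (h0 * (D - D0))%C with ((A1 - B1) - (A0 - B0) - (A1 - A0 - h0*D) + (B1 - B0 - h0*D0))%C by cr.
  eapply Rle_trans. apply cm4. lra.
Qed.

Lemma cmod_c0 (x : C) : Cmod (x - c0)%C = Cmod x.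
Proof. f_equal. unfold c0. cr. Qed.

Lemma dcont_choice rho K eps : 0 < rho -> 0 <= K -> 0 < eps ->
  exists hr del, 0 < hr <= rho/4 /\ 0 < del <= rho/4 /\
   forall X, 0 <= X <= K * (3 * del) -> (2*X + 2*(K*(hr*hr))) / hr < eps.
Proof.
  intros Hr HK He.
  set (hr := Rmin (rho/4) (eps / (8*K+1))).
  assert (Hh1 : hr <= rho/4) by apply Rmin_l. assert (Hh2 : hr <= eps/(8*K+1)) by apply Rmin_r.
  assert (Hh0 : 0 < hr) by (apply Rmin_pos; [lra|apply Rdiv_lt_0_compat; lra]).
  set (del := Rmin (rho/4) (eps * hr / (12*K+1))).
  assert (Hd1 : del <= rho/4) by apply Rmin_l. assert (Hd2 : del <= eps*hr/(12*K+1)) by apply Rmin_r.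
  assert (Hd0 : 0 < del) by (apply Rmin_pos; [lra|apply Rdiv_lt_0_compat; nra]).
  exists hr, del. split; [lra|split; [lra|]].
  intros X [HX1 HX2].
  apply Rmult_lt_reg_r with hr; auto. unfold Rdiv. rewrite Rmult_assoc, Rinv_l by lra. rewrite Rmult_1_r.
  assert (hr * (8*K+1) <= eps) by (apply Rmult_le_reg_r with (/(8*K+1)); [apply Rinv_0_lt_compat; lra|];
     rewrite Rmult_assoc, Rinv_r by lra; rewrite Rmult_1_r; exact Hh2).
  assert (del * (12*K+1) <= eps * hr) by (apply Rmult_le_reg_r with (/(12*K+1)); [apply Rinv_0_lt_compat; lra|];
     rewrite Rmult_assoc, Rinv_r by lra; rewrite Rmult_1_r; exact Hd2).
  assert (12*K*del < eps*hr) by nra.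
  assert (8*K*hr*hr < eps*hr) by nra.
  nra.
Qed.

Lemma dcont_U G rho K : 0 < rho -> 0 <= K -> LipAll G rho K -> forall eps, 0 < eps ->
  exists del, 0 < del <= rho/4 /\ forall u v t D D0, Cmod u < del -> Cmod v < del -> Cmod t < del ->
  RpU G rho K u v t D -> RpU G rho K c0 c0 c0 D0 -> Cmod (D - D0)%C < eps.
Proof.
  intros Hr HK HL eps He.
  destruct (dcont_choice rho K eps Hr HK He) as [hr [del [Hh [Hd Hf]]]].
  exists del. split; auto. intros u v t D D0 Hu Hv Ht HD HD0.
  set (h0 := RtoC hr). assert (Hh0 : Cmod h0 = hr) by (apply Cmod_RtoC_pos; lra).
  assert (Hc0 : Cmod c0 = 0) by (unfold c0; apply Cmod_0).
  assert (R1 := HD h0 ltac:(lra)). assert (R2 := HD0 h0 ltac:(lra)). rewrite Hh0 in R1, R2.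
  assert (Hsh : Cmod (u + h0) < rho/2) by (eapply Rle_lt_trans; [apply Cmod_triangle|lra]).
  assert (Hsh0 : Cmod (c0 + h0) < rho/2) by (eapply Rle_lt_trans; [apply Cmod_triangle|lra]).
  assert (L1 := lipG G rho K Hr HK HL (c0+h0)%C c0 c0 (u+h0)%C v t ltac:(lra) ltac:(lra) ltac:(lra) ltac:(lra) ltac:(lra) ltac:(lra)).
  assert (L0 := lipG G rho K Hr HK HL c0 c0 c0 u v t ltac:(lra) ltac:(lra) ltac:(lra) ltac:(lra) ltac:(lra) ltac:(lra)).
  replace ((u + h0) - (c0 + h0))%C with (u - c0)%C in L1 by cr.
  rewrite !cmod_c0 in L1, L0.
  assert (Hx0 : 0 <= K * (Cmod u + Cmod v + Cmod t)) by (apply Rmult_le_pos; auto;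
     pose proof (Cmod_ge_0 u); pose proof (Cmod_ge_0 v); pose proof (Cmod_ge_0 t); lra).
  assert (Hx1 : K * (Cmod u + Cmod v + Cmod t) <= K * (3 * del)) by (apply Rmult_le_compat_l; auto; lra).
  assert (E := dalg _ _ _ _ D D0 h0 (K * (Cmod u + Cmod v + Cmod t)) (K * (hr * hr)) R1 R2 L1 L0).
  rewrite Hh0 in E.
  assert (F := Hf _ (conj Hx0 Hx1)).
  apply Rle_lt_trans with ((2 * (K * (Cmod u + Cmod v + Cmod t)) + 2 * (K * (hr * hr))) / hr); auto.
  apply Rmult_le_reg_l with hr; [lra|].
  match goal with |- _ <= hr * ?Z => replace (hr * Z) with (2 * (K * (Cmod u + Cmod v + Cmod t)) + 2 * (K * (hr * hr))) by (field; lra) end. lra.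
Qed.

Lemma dcont_V G rho K : 0 < rho -> 0 <= K -> LipAll G rho K -> forall eps, 0 < eps ->
  exists del, 0 < del <= rho/4 /\ forall u v t D D0, Cmod u < del -> Cmod v < del -> Cmod t < del ->
  RpV G rho K u v t D -> RpV G rho K c0 c0 c0 D0 -> Cmod (D - D0)%C < eps.
Proof.
  intros Hr HK HL eps He.
  destruct (dcont_choice rho K eps Hr HK He) as [hr [del [Hh [Hd Hf]]]].
  exists del. split; auto. intros u v t D D0 Hu Hv Ht HD HD0.
  set (h0 := RtoC hr). assert (Hh0 : Cmod h0 = hr) by (apply Cmod_RtoC_pos; lra).
  assert (Hc0 : Cmod c0 = 0) by (unfold c0; apply Cmod_0).
  assert (R1 := HD h0 ltac:(lra)). assert (R2 := HD0 h0 ltac:(lra)). rewrite Hh0 in R1, R2.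
  assert (Hsh : Cmod (v + h0) < rho/2) by (eapply Rle_lt_trans; [apply Cmod_triangle|lra]).
  assert (Hsh0 : Cmod (c0 + h0) < rho/2) by (eapply Rle_lt_trans; [apply Cmod_triangle|lra]).
  assert (L1 := lipG G rho K Hr HK HL c0 (c0+h0)%C c0 u (v+h0)%C t ltac:(lra) ltac:(lra) ltac:(lra) ltac:(lra) ltac:(lra) ltac:(lra)).
  assert (L0 := lipG G rho K Hr HK HL c0 c0 c0 u v t ltac:(lra) ltac:(lra) ltac:(lra) ltac:(lra) ltac:(lra) ltac:(lra)).
  replace ((v + h0) - (c0 + h0))%C with (v - c0)%C in L1 by cr.
  rewrite !cmod_c0 in L1, L0.
  assert (Hx0 : 0 <= K * (Cmod u + Cmod v + Cmod t)) by (apply Rmult_le_pos; auto;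
     pose proof (Cmod_ge_0 u); pose proof (Cmod_ge_0 v); pose proof (Cmod_ge_0 t); lra).
  assert (Hx1 : K * (Cmod u + Cmod v + Cmod t) <= K * (3 * del)) by (apply Rmult_le_compat_l; auto; lra).
  assert (E := dalg _ _ _ _ D D0 h0 (K * (Cmod u + Cmod v + Cmod t)) (K * (hr * hr)) R1 R2 L1 L0).
  rewrite Hh0 in E.
  assert (F := Hf _ (conj Hx0 Hx1)).
  apply Rle_lt_trans with ((2 * (K * (Cmod u + Cmod v + Cmod t)) + 2 * (K * (hr * hr))) / hr); auto.
  apply Rmult_le_reg_l with hr; [lra|].
  match goal with |- _ <= hr * ?Z => replace (hr * Z) with (2 * (K * (Cmod u + Cmod v + Cmod t)) + 2 * (K * (hr * hr))) by (field; lra) end. lra.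
Qed.

Lemma dcont_T G rho K : 0 < rho -> 0 <= K -> LipAll G rho K -> forall eps, 0 < eps ->
  exists del, 0 < del <= rho/4 /\ forall u v t D D0, Cmod u < del -> Cmod v < del -> Cmod t < del ->
  RpT G rho K u v t D -> RpT G rho K c0 c0 c0 D0 -> Cmod (D - D0)%C < eps.
Proof.
  intros Hr HK HL eps He.
  destruct (dcont_choice rho K eps Hr HK He) as [hr [del [Hh [Hd Hf]]]].
  exists del. split; auto. intros u v t D D0 Hu Hv Ht HD HD0.
  set (h0 := RtoC hr). assert (Hh0 : Cmod h0 = hr) by (apply Cmod_RtoC_pos; lra).
  assert (Hc0 : Cmod c0 = 0) by (unfold c0; apply Cmod_0).
  assert (R1 := HD h0 ltac:(lra)). assert (R2 := HD0 h0 ltac:(lra)). rewrite Hh0 in R1, R2.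
  assert (Hsh : Cmod (t + h0) < rho/2) by (eapply Rle_lt_trans; [apply Cmod_triangle|lra]).
  assert (Hsh0 : Cmod (c0 + h0) < rho/2) by (eapply Rle_lt_trans; [apply Cmod_triangle|lra]).
  assert (L1 := lipG G rho K Hr HK HL c0 c0 (c0+h0)%C u v (t+h0)%C ltac:(lra) ltac:(lra) ltac:(lra) ltac:(lra) ltac:(lra) ltac:(lra)).
  assert (L0 := lipG G rho K Hr HK HL c0 c0 c0 u v t ltac:(lra) ltac:(lra) ltac:(lra) ltac:(lra) ltac:(lra) ltac:(lra)).
  replace ((t + h0) - (c0 + h0))%C with (t - c0)%C in L1 by cr.
  rewrite !cmod_c0 in L1, L0.
  assert (Hx0 : 0 <= K * (Cmod u + Cmod v + Cmod t)) by (apply Rmult_le_pos; auto;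
     pose proof (Cmod_ge_0 u); pose proof (Cmod_ge_0 v); pose proof (Cmod_ge_0 t); lra).
  assert (Hx1 : K * (Cmod u + Cmod v + Cmod t) <= K * (3 * del)) by (apply Rmult_le_compat_l; auto; lra).
  assert (E := dalg _ _ _ _ D D0 h0 (K * (Cmod u + Cmod v + Cmod t)) (K * (hr * hr)) R1 R2 L1 L0).
  rewrite Hh0 in E.
  assert (F := Hf _ (conj Hx0 Hx1)).
  apply Rle_lt_trans with ((2 * (K * (Cmod u + Cmod v + Cmod t)) + 2 * (K * (hr * hr))) / hr); auto.
  apply Rmult_le_reg_l with hr; [lra|].
  match goal with |- _ <= hr * ?Z => replace (hr * Z) with (2 * (K * (Cmod u + Cmod v + Cmod t)) + 2 * (K * (hr * hr))) by (field; lra) end. lra.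
Qed.

Definition box3 (r : R) (w : C3) : Prop := Cmod (p1 w) < r /\ Cmod (p2 w) < r /\ Cmod (p3 w) < r.
Definition box2 (r : R) (w : CC * CC) : Prop := Cmod (fst w) < r /\ Cmod (snd w) < r.

Lemma cmod_near (x y : C) r e : Cmod x < r - e -> Cmod (y - x)%C < e -> Cmod y < r.
Proof.
  intros H1 H2. replace y with (x + (y - x))%C by cr.
  eapply Rle_lt_trans. apply Cmod_triangle. lra.
Qed.

Lemma open3_box r : open3 (box3 r).
Proof.
  intros w [H1 [H2 H3]].
  exists (Rmin (r - Cmod (p1 w)) (Rmin (r - Cmod (p2 w)) (r - Cmod (p3 w))) / 2).
  split. { assert (0 < Rmin (r - Cmod (p1 w)) (Rmin (r - Cmod (p2 w)) (r - Cmod (p3 w)))) by (repeat apply Rmin_pos; lra). lra. }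
  intros w' [A1 [A2 A3]].
  assert (E1 := Rmin_l (r - Cmod (p1 w)) (Rmin (r - Cmod (p2 w)) (r - Cmod (p3 w)))).
  assert (E2 := Rmin_r (r - Cmod (p1 w)) (Rmin (r - Cmod (p2 w)) (r - Cmod (p3 w)))).
  assert (E3 := Rmin_l (r - Cmod (p2 w)) (r - Cmod (p3 w))).
  assert (E4 := Rmin_r (r - Cmod (p2 w)) (r - Cmod (p3 w))).
  remember (Rmin (r - Cmod (p1 w)) (Rmin (r - Cmod (p2 w)) (r - Cmod (p3 w))) / 2) as e eqn:He.
  assert (0 < Rmin (r - Cmod (p1 w)) (Rmin (r - Cmod (p2 w)) (r - Cmod (p3 w)))) by (repeat apply Rmin_pos; lra).
  split; [|split].
  - apply (cmod_near (p1 w) _ _ e); auto; lra.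
  - apply (cmod_near (p2 w) _ _ e); auto; lra.
  - apply (cmod_near (p3 w) _ _ e); auto; lra.
Qed.

Lemma open2_box r : open2 (box2 r).
Proof.
  intros w [H1 H2].
  exists (Rmin (r - Cmod (fst w)) (r - Cmod (snd w)) / 2).
  split. { assert (0 < Rmin (r - Cmod (fst w)) (r - Cmod (snd w))) by (apply Rmin_pos; lra). lra. }
  intros w' [A1 A2].
  assert (E1 := Rmin_l (r - Cmod (fst w)) (r - Cmod (snd w))).
  assert (E2 := Rmin_r (r - Cmod (fst w)) (r - Cmod (snd w))).
  remember (Rmin (r - Cmod (fst w)) (r - Cmod (snd w)) / 2) as e eqn:He.
  assert (0 < Rmin (r - Cmod (fst w)) (r - Cmod (snd w))) by (apply Rmin_pos; lra).
  split.
  - apply (cmod_near (fst w) _ _ e); auto; lra.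
  - apply (cmod_near (snd w) _ _ e); auto; lra.
Qed.

Lemma deriv_exact (f : C -> C) x l : (forall h, f (x + h)%C = (f x + h * l)%C) -> is_derive f x l.
Proof.
  intros H. apply (deriv_of_rem _ _ _ 1 0 Rlt_0_1 (Rle_refl 0)). intros h _.
  rewrite H. replace (f x + h * l - f x - h * l)%C with (RtoC 0) by cr. rewrite Cmod_0. lra.
Qed.

Lemma holo3_p1 D : open3 D -> holo3 p1 D.
Proof.
  intros HD. split; auto. split.
  - intros w _ e He. exists e. split; auto. intros w' [A _]. auto.
  - intros w _. exists (RtoC 1), (RtoC 0), (RtoC 0). unfold pd1, pd2, pd3.
    split; [|split]; apply deriv_exact; intros h; unfold p1, p2, p3; simpl; cr.
Qed.
Lemma holo3_p2 D : open3 D -> holo3 p2 D.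
Proof.
  intros HD. split; auto. split.
  - intros w _ e He. exists e. split; auto. intros w' [_ [A _]]. auto.
  - intros w _. exists (RtoC 0), (RtoC 1), (RtoC 0). unfold pd1, pd2, pd3.
    split; [|split]; apply deriv_exact; intros h; unfold p1, p2, p3; simpl; cr.
Qed.
Lemma holo3_const D (c : CC) : open3 D -> holo3 (fun _ => c) D.
Proof.
  intros HD. split; auto. split.
  - intros w _ e He. exists e. split; auto. intros w' _. replace (c - c)%C with (RtoC 0) by cr. rewrite Cmod_0. lra.
  - intros w _. exists (RtoC 0), (RtoC 0), (RtoC 0). unfold pd1, pd2, pd3.
    split; [|split]; apply deriv_exact; intros h; cr.
Qed.

Lemma rem_minus (A0 A1 B0 B1 D E h : C) R1 R2 :
  Cmod (A1 - A0 - h * D)%C <= R1 -> Cmod (B1 - B0 - h * E)%C <= R2 ->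
  Cmod ((A1 - B1) - (A0 - B0) - h * (D - E))%C <= R1 + R2.
Proof.
  intros. replace ((A1 - B1) - (A0 - B0) - h * (D - E))%C with
    ((A1 - A0 - h * D) + - (B1 - B0 - h * E))%C by cr.
  eapply Rle_trans. apply Cmod_triangle. rewrite Cmod_opp. lra.
Qed.

Lemma inj_t G rho K u v t t' D D0 :
  RpT G rho K u v t D -> Cmod (D - D0)%C < Cmod D0 / 2 -> K * Cmod (t' - t)%C < Cmod D0 / 2 ->
  Cmod (t' - t)%C <= rho -> G (u, v, t') = G (u, v, t) -> t = t'.
Proof.
  intros HR HD HK Hh HG.
  destruct (Ceq_dec t t') as [E|N]; auto. exfalso.
  assert (Hpos : 0 < Cmod (t' - t)%C) by (apply Cmod_gt_0; intro Z; apply N; 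
     replace t' with (t + (t' - t))%C by cr; rewrite Z; cr).
  specialize (HR (t' - t)%C Hh). replace (t + (t' - t))%C with t' in HR by cr.
  rewrite HG in HR.
  replace (G (u, v, t) - G (u, v, t) - (t' - t) * D)%C with (- ((t' - t) * D))%C in HR by cr.
  rewrite Cmod_opp, Cmod_mult in HR.
  assert (Cmod D <= K * Cmod (t' - t)%C).
  { apply Rmult_le_reg_l with (Cmod (t' - t)%C); auto. nra. }
  assert (Cmod D0 <= Cmod D + Cmod (D - D0)%C).
  { replace D0 with (D - (D - D0))%C at 1 by cr. unfold Cminus at 1.
    eapply Rle_trans. apply Cmod_triangle. rewrite Cmod_opp. lra. }
  lra.
Qed.

Lemma smooth_gen G rho K : 0 < rho -> 0 <= K -> DerAll G rho K ->
  (exists del, 0 < del <= rho/4 /\ forall u v t Du Dv Dt, Cmod u < del -> Cmod v < del -> Cmod t < del ->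
     RpU G rho K u v t Du -> RpV G rho K u v t Dv -> RpT G rho K u v t Dt -> (Du, Dv, Dt) <> origin) ->
  smooth_near_origin G.
Proof.
  intros Hr HK HD [del [Hdel H]]. exists del. split; [lra|].
  intros [[u v] t] [A1 [A2 A3]] _. unfold origin, p1, p2, p3 in A1, A2, A3. simpl in A1, A2, A3.
  rewrite cmod_c0 in A1, A2, A3.
  destruct (HD u v t ltac:(lra) ltac:(lra) ltac:(lra)) as [[Du HU] [[Dv HV] [Dt HT]]].
  exists (Du, Dv, Dt). split.
  - split; [|split]; simpl.
    + apply (pd1_of G rho K); auto.
    + apply (pd2_of G rho K); auto.
    + apply (pd3_of G rho K); auto.
  - apply (H u v t); auto.
Qed.

Lemma cmod_cc : Cmod (c0 - c0)%C = 0.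
Proof. rewrite cmod_c0. unfold c0. apply Cmod_0. Qed.

Lemma Cmod_c0 : Cmod c0 = 0.
Proof. unfold c0. apply Cmod_0. Qed.

Lemma good_gen a m q b1 b2 G rho K Dt0 :
  0 < rho -> 0 <= K -> LipAll G rho K -> DerAll G rho K ->
  RpU G rho K c0 c0 c0 c0 -> RpV G rho K c0 c0 c0 c0 -> RpT G rho K c0 c0 c0 Dt0 -> Dt0 <> c0 ->
  (forall u v, Cmod u < rho -> Cmod v < rho -> G (u, v, c0) = hom a m (chartpt q b1 b2 u v)) ->
  hom a m q = c0 ->
  good_coordinates a m q b1 b2 G.
Proof.
  intros Hr HK HL HD HU0 HV0 HT0 HDt0 HG0 Hq.
  assert (HDp : 0 < Cmod Dt0) by (apply Cmod_gt_0; exact HDt0).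
  destruct (dcont_T G rho K Hr HK HL (Cmod Dt0 / 2) ltac:(lra)) as [del [Hdel Hc]].
  set (rho2 := Rmin del (Cmod Dt0 / (8*K+1))).
  assert (Hr2a : rho2 <= del) by apply Rmin_l.
  assert (Hr2b : rho2 <= Cmod Dt0 / (8*K+1)) by apply Rmin_r.
  assert (Hr20 : 0 < rho2) by (apply Rmin_pos; [lra|apply Rdiv_lt_0_compat; lra]).
  assert (HK2 : K * (2 * rho2) < Cmod Dt0 / 2).
  { assert (rho2 * (8*K+1) <= Cmod Dt0) by (apply Rmult_le_reg_r with (/(8*K+1)); [apply Rinv_0_lt_compat; lra|];
     rewrite Rmult_assoc, Rinv_r by lra; rewrite Rmult_1_r; exact Hr2b). nra. }
  assert (Hinj : forall u v t t', Cmod u < rho2 -> Cmod v < rho2 -> Cmod t < rho2 -> Cmod t' < rho2 ->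
            G (u, v, t') = G (u, v, t) -> t = t').
  { intros u v t t' Hu Hv Ht Ht' E.
    destruct (HD u v t ltac:(lra) ltac:(lra) ltac:(lra)) as [_ [_ [Dt HT]]].
    assert (Hd := Hc u v t Dt Dt0 ltac:(lra) ltac:(lra) ltac:(lra) HT HT0).
    assert (Htt : Cmod (t' - t)%C < 2 * rho2) by (unfold Cminus; eapply Rle_lt_trans; [apply Cmod_triangle|rewrite Cmod_opp; lra]).
    apply (inj_t G rho K u v t t' Dt Dt0); auto.
    - assert (K * Cmod (t' - t)%C <= K * (2 * rho2)) by (apply Rmult_le_compat_l; lra). lra.
    - lra. }
  set (W := box3 rho2).
  set (f3 := fun w : C3 => (G w - G (p1 w, p2 w, c0))%C).
  set (hh := fun z : CC * CC => G (fst z, snd z, c0)).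
  exists W, p1, p2, f3, hh, (box2 rho2), (fun _ => RtoC 1),
    (RtoC 1, RtoC 0, RtoC 0), (RtoC 0, RtoC 1, RtoC 0), (RtoC 0, RtoC 0, Dt0).
  assert (HWo : W origin).
  { unfold W, box3, origin, p1, p2, p3; simpl. rewrite Cmod_c0. lra. }
  assert (HoW : open3 W) by apply open3_box.
  split; [exact HWo|].
  split; [apply holo3_p1; auto|].
  split; [apply holo3_p2; auto|].
  split.
  {
    split; auto. split.
    - intros [[u v] t] [Hu [Hv Ht]] eps He. unfold p1, p2, p3 in Hu, Hv, Ht; simpl in Hu, Hv, Ht.
      exists (Rmin (rho/4) (eps / (6*K+1))). split. { apply Rmin_pos; [lra|apply Rdiv_lt_0_compat; lra]. }
      intros [[u' v'] t'] [A1 [A2 A3]]. unfold p1, p2, p3 in A1, A2, A3; simpl in A1, A2, A3.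
      assert (Em1 := Rmin_l (rho/4) (eps / (6*K+1))). assert (Em2 := Rmin_r (rho/4) (eps / (6*K+1))).
      set (d := Rmin (rho/4) (eps / (6*K+1))) in *. assert (Hd0 : 0 < d) by (unfold d; apply Rmin_pos; [lra|apply Rdiv_lt_0_compat; lra]). clearbody d.
      assert (Hu' : Cmod u' < rho/2) by (apply (cmod_near u _ _ d); auto; lra).
      assert (Hv' : Cmod v' < rho/2) by (apply (cmod_near v _ _ d); auto; lra).
      assert (Ht' : Cmod t' < rho/2) by (apply (cmod_near t _ _ d); auto; lra).
      assert (Hc0 : Cmod c0 < rho/2) by (rewrite Cmod_c0; lra).
      assert (L1 := lipG G rho K Hr HK HL u v t u' v' t' ltac:(lra) ltac:(lra) ltac:(lra) Hu' Hv' Ht').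
      assert (L2 := lipG G rho K Hr HK HL u v c0 u' v' c0 ltac:(lra) ltac:(lra) Hc0 Hu' Hv' Hc0).
      rewrite cmod_cc in L2.
      unfold f3, p1, p2, p3; simpl.
      replace (G (u', v', t') - G (u', v', c0) - (G (u, v, t) - G (u, v, c0)))%C with
        ((G (u', v', t') - G (u, v, t)) + - (G (u', v', c0) - G (u, v, c0)))%C by cr.
      eapply Rle_lt_trans. apply Cmod_triangle. rewrite Cmod_opp.
      assert (K * (Cmod (u' - u)%C + Cmod (v' - v)%C + Cmod (t' - t)%C) <= K * (3 * d)) by (apply Rmult_le_compat_l; lra).
      assert (K * (Cmod (u' - u)%C + Cmod (v' - v)%C + 0) <= K * (3 * d)) by (apply Rmult_le_compat_l; pose proof (Cmod_ge_0 (t'-t)%C); lra).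
      assert (d * (6*K+1) <= eps) by (apply Rmult_le_reg_r with (/(6*K+1)); [apply Rinv_0_lt_compat; lra|];
        rewrite Rmult_assoc, Rinv_r by lra; rewrite Rmult_1_r; exact Em2).
      assert (0 < d) by lra.
      eapply Rle_lt_trans. apply Rplus_le_compat; [apply L1|apply L2]. clear - H H0 H1 H2. nra.
    - intros [[u v] t] [Hu [Hv Ht]]. unfold p1, p2, p3 in Hu, Hv, Ht; simpl in Hu, Hv, Ht.
      assert (Hc0 : Cmod c0 < rho) by (rewrite Cmod_c0; lra).
      destruct (HD u v t ltac:(lra) ltac:(lra) ltac:(lra)) as [[Du HU] [[Dv HV] [Dt HT]]].
      destruct (HD u v c0 ltac:(lra) ltac:(lra) Hc0) as [[Du' HU'] [[Dv' HV'] _]].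
      exists (Du - Du')%C, (Dv - Dv')%C, Dt.
      split; [|split].
      + unfold pd1. apply (deriv_of_rem _ _ _ rho (K + K) Hr ltac:(lra)). intros h Hh.
        unfold f3, p1, p2, p3; cbn [fst snd].
        replace (K + K) with (K + K) by reflexivity. rewrite Rmult_plus_distr_r.
        apply rem_minus; [apply HU|apply HU']; auto.
      + unfold pd2. apply (deriv_of_rem _ _ _ rho (K + K) Hr ltac:(lra)). intros h Hh.
        unfold f3, p1, p2, p3; cbn [fst snd]. rewrite Rmult_plus_distr_r.
        apply rem_minus; [apply HV|apply HV']; auto.
      + unfold pd3. apply (deriv_of_rem _ _ _ rho K Hr HK). intros h Hh.
        unfold f3, p1, p2, p3; cbn [fst snd].
        assert (E : forall A B C0 : C, (A - B - (C0 - B) - h * Dt)%C = (A - C0 - h*Dt)%C) by (intros; cr).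
        rewrite E. apply (HT h Hh). }
  split.
  {
    intros [[u v] t] [[u' v'] t'] [Hu [Hv Ht]] [Hu' [Hv' Ht']] E.
    unfold p1, p2, p3 in *; simpl in *.
    assert (E1 := f_equal (fun z : CC * CC * CC => fst (fst z)) E).
    assert (E2 := f_equal (fun z : CC * CC * CC => snd (fst z)) E).
    assert (E3 := f_equal (fun z : CC * CC * CC => snd z) E).
    cbv beta in E1, E2, E3. cbn [fst snd] in E1, E2, E3. subst u' v'.
    unfold f3, p1, p2, p3 in E3; cbn [fst snd] in E3.
    assert (G (u, v, t') = G (u, v, t)).
    { assert (Z : forall A B C0 : C, (A - B)%C = (C0 - B)%C -> A = C0).
      { intros A B C0 Z. apply (f_equal (fun z => (z + B)%C)) in Z.
        replace (A - B + B)%C with A in Z by cr. replace (C0 - B + B)%C with C0 in Z by cr. exact Z. }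
      symmetry. eapply Z. exact E3. }
    f_equal. apply (Hinj u v t t'); auto. }
  split.
  { split; [|split]; unfold pd1, pd2, pd3; apply deriv_exact; intros h; unfold p1, p2, p3, origin; cbn [fst snd]; cr. }
  split.
  { split; [|split]; unfold pd1, pd2, pd3; apply deriv_exact; intros h; unfold p1, p2, p3, origin; cbn [fst snd]; cr. }
  split.
  { split; [|split]; unfold pd1, pd2, pd3.
    - apply deriv_exact; intros h; unfold f3, p1, p2, p3, origin; cbn [fst snd]; cr.
    - apply deriv_exact; intros h; unfold f3, p1, p2, p3, origin; cbn [fst snd]; cr.
    - apply (deriv_of_rem _ _ _ rho K Hr HK). intros h Hh.
      unfold f3, p1, p2, p3, origin; cbn [fst snd].
      assert (E : forall A B : C, (A - B - (B - B) - h * Dt0)%C = (A - B - h*Dt0)%C) by (intros; cr).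
      rewrite E. apply (HT0 h Hh). }
  split.
  { unfold det3, p1, p2, p3; cbn [fst snd].
    replace (RtoC 1 * (RtoC 1 * Dt0 - RtoC 0 * RtoC 0) - RtoC 0 * (RtoC 0 * Dt0 - RtoC 0 * RtoC 0) +
             RtoC 0 * (RtoC 0 * RtoC 0 - RtoC 1 * RtoC 0))%C with Dt0 by cr. exact HDt0. }
  split; [reflexivity|].
  split; [reflexivity|].
  split.
  { unfold f3, origin, p1, p2, p3; cbn [fst snd]. unfold c0; cr. }
  split.
  { intros [[u v] t] [Hu [Hv Ht]]. unfold p1, p2, p3 in Hu, Hv, Ht; cbn [fst snd] in Hu, Hv, Ht.
    unfold f3, p1, p2, p3; cbn [fst snd]. split.
    - intros E. subst t. unfold c0; cr.
    - intros E. assert (Z : G (u, v, t) = G (u, v, c0)).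
      { apply (f_equal (fun z => (z + G (u, v, c0))%C)) in E.
        assert (E' : forall A B : C, (A - B + B)%C = A) by (intros; cr).
        rewrite E' in E. rewrite E. unfold c0; cr. }
      symmetry. apply (Hinj u v c0 t); auto. rewrite Cmod_c0; lra. }
  split.
  { split; [apply open2_box|split].
    - intros [x y] [Hx Hy] eps He. cbn [fst snd] in Hx, Hy.
      exists (Rmin (rho/4) (eps / (3*K+1))). split. { apply Rmin_pos; [lra|apply Rdiv_lt_0_compat; lra]. }
      intros [x' y'] [A1 A2]. cbn [fst snd] in A1, A2.
      assert (Em1 := Rmin_l (rho/4) (eps / (3*K+1))). assert (Em2 := Rmin_r (rho/4) (eps / (3*K+1))).
      set (d := Rmin (rho/4) (eps / (3*K+1))) in *.
      assert (Hd0 : 0 < d) by (unfold d; apply Rmin_pos; [lra|apply Rdiv_lt_0_compat; lra]). clearbody d.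
      assert (Hx' : Cmod x' < rho/2) by (apply (cmod_near x _ _ d); auto; lra).
      assert (Hy' : Cmod y' < rho/2) by (apply (cmod_near y _ _ d); auto; lra).
      assert (Hc0 : Cmod c0 < rho/2) by (rewrite Cmod_c0; lra).
      assert (L2 := lipG G rho K Hr HK HL x y c0 x' y' c0 ltac:(lra) ltac:(lra) Hc0 Hx' Hy' Hc0).
      rewrite cmod_cc in L2.
      unfold hh; cbn [fst snd].
      assert (K * (Cmod (x' - x)%C + Cmod (y' - y)%C + 0) <= K * (2 * d)) by (apply Rmult_le_compat_l; lra).
      assert (d * (3*K+1) <= eps) by (apply Rmult_le_reg_r with (/(3*K+1)); [apply Rinv_0_lt_compat; lra|];
        rewrite Rmult_assoc, Rinv_r by lra; rewrite Rmult_1_r; exact Em2).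
      eapply Rle_lt_trans. apply L2. clear - H H0 Hd0 HK. nra.
    - intros [x y] [Hx Hy]. cbn [fst snd] in Hx, Hy.
      assert (Hc0 : Cmod c0 < rho) by (rewrite Cmod_c0; lra).
      destruct (HD x y c0 ltac:(lra) ltac:(lra) Hc0) as [[Du HU] [[Dv HV] _]].
      exists Du, Dv. split.
      + unfold qd1. apply (deriv_of_rem _ _ _ rho K Hr HK). intros h Hh. unfold hh; cbn [fst snd].
        apply (HU h Hh).
      + unfold qd2. apply (deriv_of_rem _ _ _ rho K Hr HK). intros h Hh. unfold hh; cbn [fst snd].
        apply (HV h Hh). }
  split.
  { intros w [Hu [Hv _]]. split; auto. }
  split.
  { intros w _. unfold f3, hh; cbn [fst snd].
    assert (E' : forall A B : C, (A - B + B)%C = A) by (intros; cr). rewrite E'. tauto. }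
  split; [apply holo3_const; auto|].
  split.
  { intros w _ E. apply RtoC_inj in E. lra. }
  split.
  { intros [[u v] t] [Hu [Hv Ht]] _. unfold p1, p2, p3 in Hu, Hv, Ht; cbn [fst snd] in Hu, Hv, Ht.
    unfold hh, p1, p2; cbn [fst snd]. rewrite HG0 by lra. cr. }
  split.
  { unfold hh; cbn [fst snd]. assert (Hc0 : Cmod c0 < rho) by (rewrite Cmod_c0; lra).
    rewrite HG0 by auto. rewrite chart0. exact Hq. }
  split.
  - unfold qd1. apply (deriv_of_rem _ _ _ rho K Hr HK). intros h Hh. unfold hh; cbn [fst snd].
    apply (HU0 h Hh).
  - unfold qd2. apply (deriv_of_rem _ _ _ rho K Hr HK). intros h Hh. unfold hh; cbn [fst snd].
    apply (HV0 h Hh).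
Qed.

Lemma cmod_c0_minus (x : C) : Cmod (c0 - x)%C = Cmod x.
Proof. replace (c0 - x)%C with (- x)%C by (unfold c0; cr). apply Cmod_opp. Qed.

Lemma RtoC1_neq : RtoC 1 <> c0.
Proof. intro E. unfold c0 in E. apply RtoC_inj in E. lra. Qed.



Theorem lemma2p1 (a : coeffs) (m : nat) (q b1 b2 : C3) (G : C3 -> CC) :
  convergent a ->
  order_is a m ->
  (forall w : C3, w <> origin -> sing_pt a m w -> hom a (m + 1) w <> c0) ->
  det3 q b1 b2 <> c0 ->
  hom a m q = c0 ->
  strict_transform_eq a m q b1 b2 G ->
  smooth_near_origin G /\
  (transverse_at_origin G <-> ~ sing_pt a m q) /\
  (sing_pt a m q -> good_coordinates a m q b1 b2 G).
Proof.
  intros Hconv _ Hsing Hdet Hq Hst.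
  destruct (conv_bound a Hconv) as [R0 [B [HR0 HB]]].
  destruct Hst as [r [Hr HGs]].
  destruct (Nq_ge q b1 b2) as [HN _].
  set (rho := Rmin (Rmin (r/2) (1/2)) (R0/(18 * Nq q b1 b2))).
  assert (Hr1 : rho <= Rmin (r/2) (1/2)) by apply Rmin_l.
  assert (Hr2 : rho <= R0/(18 * Nq q b1 b2)) by apply Rmin_r.
  assert (Hr3 : Rmin (r/2) (1/2) <= r/2) by apply Rmin_l.
  assert (Hr4 : Rmin (r/2) (1/2) <= 1/2) by apply Rmin_r.
  assert (Hr0 : 0 < rho) by (repeat apply Rmin_pos; try lra; apply Rdiv_lt_0_compat; lra).
  assert (Hr5 : 6 * (3 * Nq q b1 b2) * rho <= R0).
  { apply Rmult_le_compat_l with (r := 18 * Nq q b1 b2) in Hr2; [|lra].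
    unfold Rdiv in Hr2. rewrite (Rmult_comm R0), <- Rmult_assoc, Rinv_r, Rmult_1_l in Hr2 by lra. lra. }
  clearbody rho.
  assert (HS : Setup a m q b1 b2 G rho).
  { exists r, R0, B. repeat split; auto; lra. }
  destruct (core_all _ _ _ _ _ _ _ HS) as [K [HK [HL [HD [HU0 [HV0 HT0]]]]]].
  set (Du0 := dhom a m q b1). set (Dv0 := dhom a m q b2). set (Dt0 := hom a (m+1) q).
  assert (SU := series_first (fun k => dhom a (m+k) (chartpt q b1 b2 c0 c0) b1)).
  assert (SV := series_first (fun k => dhom a (m+k) (chartpt q b1 b2 c0 c0) b2)).
  assert (ST := series_second (fun k => hom a (m+k) (chartpt q b1 b2 c0 c0))).
  cbv beta in SU, SV, ST. rewrite Nat.add_0_r, chart0 in SU, SV. rewrite chart0 in ST. rewrite chart0 in HU0, HV0, HT0.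
  assert (RU0 := HU0 Du0 SU). assert (RV0 := HV0 Dv0 SV). assert (RT0 := HT0 Dt0 ST).
  assert (HG0 : forall u v, Cmod u < rho -> Cmod v < rho -> G (u, v, c0) = hom a m (chartpt q b1 b2 u v)).
  { intros u v Hu Hv.
    assert (Hc0 : Cmod c0 < r) by (unfold c0; rewrite Cmod_0; lra).
    assert (A := HGs u v c0 ltac:(lra) ltac:(lra) Hc0).
    assert (Bs := series_first (fun k => hom a (m+k) (chartpt q b1 b2 u v))).
    cbv beta in Bs. rewrite Nat.add_0_r in Bs.
    eapply series_unique; eauto. }
  assert (Hgrad : grad3 G origin (Du0, Dv0, Dt0)).
  { unfold origin. split; [|split]; simpl.
    - apply (pd1_of G rho K); auto.
    - apply (pd2_of G rho K); auto.
    - apply (pd3_of G rho K); auto. }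
  assert (Hqo : q <> origin).
  { intro E. apply Hdet. rewrite E. unfold det3, origin, p1, p2, p3; cbn [fst snd]. unfold c0; cr. }
  assert (Heul : (p1 q * hom_dx a m q + p2 q * hom_dy a m q + p3 q * hom_dz a m q)%C = c0).
  { rewrite <- dhom_grad, euler, Hq. unfold c0; cr. }
  assert (NS : ~ sing_pt a m q -> Du0 <> c0 \/ Dv0 <> c0).
  { intro Hns. destruct (Ceq_dec Du0 c0) as [E1|E1]; [|left; auto].
    destruct (Ceq_dec Dv0 c0) as [E2|E2]; [|right; auto].
    exfalso. apply Hns. unfold Du0, Dv0 in E1, E2. rewrite dhom_grad in E1, E2.
    destruct (cramer q b1 b2 (hom_dx a m q, hom_dy a m q, hom_dz a m q) Hdet Heul E1 E2) as [G1 [G2 G3]].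
    unfold sing_pt. simpl in G1, G2, G3. auto. }
  assert (SG : sing_pt a m q -> Du0 = c0 /\ Dv0 = c0 /\ Dt0 <> c0).
  { intros Hs. destruct Hs as [_ [Z1 [Z2 Z3]]]. split; [|split].
    - unfold Du0. rewrite dhom_grad, Z1, Z2, Z3. unfold c0; cr.
    - unfold Dv0. rewrite dhom_grad, Z1, Z2, Z3. unfold c0; cr.
    - unfold Dt0. apply Hsing; auto. split; auto. }
  split; [|split].
  -
    apply (smooth_gen G rho K); auto.
    destruct (classic (sing_pt a m q)) as [Hs|Hns].
    + destruct (SG Hs) as [_ [_ HDt]].
      assert (HDp : 0 < Cmod Dt0) by (apply Cmod_gt_0; exact HDt).
      destruct (dcont_T G rho K Hr0 HK HL (Cmod Dt0) HDp) as [del [Hdel Hc]].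
      exists del. split; auto. intros u v t Du Dv Dt Hu Hv Ht _ _ HT E.
      assert (Hd := Hc u v t Dt Dt0 Hu Hv Ht HT RT0).
      assert (Dt = c0) by (apply (f_equal snd) in E; exact E). subst Dt.
      rewrite cmod_c0_minus in Hd. lra.
    + destruct (NS Hns) as [HDu|HDv].
      * assert (HDp : 0 < Cmod Du0) by (apply Cmod_gt_0; exact HDu).
        destruct (dcont_U G rho K Hr0 HK HL (Cmod Du0) HDp) as [del [Hdel Hc]].
        exists del. split; auto. intros u v t Du Dv Dt Hu Hv Ht HU _ _ E.
        assert (Hd := Hc u v t Du Du0 Hu Hv Ht HU RU0).
        assert (Du = c0) by (apply (f_equal (fun z : C3 => fst (fst z))) in E; exact E). subst Du.
        rewrite cmod_c0_minus in Hd. lra.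
      * assert (HDp : 0 < Cmod Dv0) by (apply Cmod_gt_0; exact HDv).
        destruct (dcont_V G rho K Hr0 HK HL (Cmod Dv0) HDp) as [del [Hdel Hc]].
        exists del. split; auto. intros u v t Du Dv Dt Hu Hv Ht _ HV _ E.
        assert (Hd := Hc u v t Dv Dv0 Hu Hv Ht HV RV0).
        assert (Dv = c0) by (apply (f_equal (fun z : C3 => snd (fst z))) in E; exact E). subst Dv.
        rewrite cmod_c0_minus in Hd. lra.
  -
    destruct Hgrad as [P1 [P2 P3]]. simpl in P1, P2, P3.
    split.
    + intros [l [[L1 [L2 L3]] Hc]] Hs.
      destruct (SG Hs) as [Z1 [Z2 _]].
      assert (E1 : p1 l = Du0) by (rewrite <- (is_C_derive_unique _ _ _ L1); apply is_C_derive_unique; exact P1).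
      assert (E2 : p2 l = Dv0) by (rewrite <- (is_C_derive_unique _ _ _ L2); apply is_C_derive_unique; exact P2).
      destruct (Hc (RtoC 1) (- p3 l)%C) as [F _].
      * rewrite E1, Z1. unfold c0; cr.
      * rewrite E2, Z2. unfold c0; cr.
      * unfold c0; cr.
      * exact (RtoC1_neq F).
    + intros Hns. exists (Du0, Dv0, Dt0). split; [split; [|split]; auto|].
      intros al be H1 H2 H3. simpl in H1, H2, H3.
      assert (Hal : al = c0).
      { destruct (Ceq_dec al c0) as [Z|Z]; auto. exfalso.
        destruct (NS Hns) as [HDu|HDv].
        - exact (Cmult_neq_0 _ _ Z HDu H1).
        - exact (Cmult_neq_0 _ _ Z HDv H2). }
      split; auto. subst al. replace (c0 * Dt0 + be)%C with be in H3 by (unfold c0; cr). exact H3.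
  -
    intros Hs. destruct (SG Hs) as [Z1 [Z2 HDt]].
    rewrite Z1 in RU0. rewrite Z2 in RV0.
    apply (good_gen a m q b1 b2 G rho K Dt0); auto.
Qed.
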